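(* Let $k\in\mathbb{R}$, $T$ large, and suppose $t\in\mathcal{S}$. Let $W_0=20|k|V_0$. Then as $X\to\infty$, \[ P_X(\tfrac12+it)^k=\big(1+O(e^{-19|k|V_0})\big)D(t,k), \] where $D(t,k)=\sum_{n\in S(X)}\alpha_k(n)n^{-1/2-it}$ and the coefficients $\alpha_k(n)$ satisfy: (i) $\alpha_k(n)$ is supported on integers $n\leqslant X^{W_0}$ and $|\alpha_k(n)|\leqslant d_{|k|}(n)$; (ii) there is a multiplicative function $\beta_k$ such that $\alpha_k(n)=\beta_k(n)$ whenever $\Omega(n)\leqslant W_0$, with $\beta_k(n)=d_k(n)$ whenever every prime power $p^m$ dividing $n$ satisfies $p^m\leqslant X$, and $|\beta_k(n)|\leqslant d_{|k|}(n)$ for all $n$.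
   Context: $\Lambda$ is the von Mangoldt function and $P_X(s)=\exp\big(\sum_{n\leqslant X}\frac{\Lambda(n)}{n^s\log n}\big)$. Let $F(t)=\sum_{n\leqslant X}\frac{\Lambda(n)}{n^{1/2+it}\log n}$, $V_0=(\log\log T)(\log\log\log T)$ and $\mathcal{S}=\{t\in[T,2T]:|\Re F(t)|\leqslant V_0,\ |\Im F(t)|\leqslant V_0\}$. The Dirichlet polynomial $D(t,k)$ is the truncated exponential series $\sum_{0\leqslant j\leqslant W_0}\frac{k^j}{j!}F(t)^j$, and $\alpha_k(n)$ are its coefficients when written as $\sum_n\alpha_k(n)n^{-1/2-it}$. $S(X)$ is the set of positive integers all of whose prime factors are $\leqslant X$. $\Omega(n)$ is the number of prime factors of $n$ counted with multiplicity. For real $k$, $d_k(n)$ is the multiplicative function with $\sum_nd_k(n)n^{-s}=\zeta(s)^k$. *)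

(* Defs.v *)
From Stdlib Require Import Reals Lra Lia ZArith Znumtheory List.
From Coquelicot Require Import Coquelicot.
Import ListNotations.
From Stdlib Require Import Bool.
Open Scope bool_scope.
Open Scope R_scope.

Definition sumR (f : nat -> R) (N : nat) : R :=
  fold_right Rplus 0 (map f (seq 0 (S N))).
Definition prodR (f : nat -> R) (N : nat) : R :=
  fold_right Rmult 1 (map f (seq 0 (S N))).
Definition sumC (f : nat -> C) (N : nat) : C :=
  fold_right Cplus (RtoC 0) (map f (seq 0 (S N))).
Definition sumN (f : nat -> nat) (N : nat) : nat :=
  fold_right Nat.add 0%nat (map f (seq 0 (S N))).

Definition Cexp (z : C) : C :=
  (exp (Re z) * cos (Im z), exp (Re z) * sin (Im z)).
Definition npow_neg (n : nat) (s : C) : C :=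
  Cexp (Copp (Cmult (RtoC (ln (INR n))) s)).

Definition primeb (p : nat) : bool :=
  if prime_dec (Z.of_nat p) then true else false.

Definition Lambda (n : nat) : R :=
  sumR (fun p => sumR (fun m =>
          if primeb p && Nat.ltb 0 m && Nat.eqb (p ^ m) n
          then ln (INR p) else 0) n) n.

(* multiplicity of p in n (for p >= 2, n >= 1): number of a >= 1 with p^a | n *)
Definition vp (p n : nat) : nat :=
  sumN (fun a => if Nat.ltb 0 a && Nat.eqb (n mod (p ^ a)) 0 then 1%nat else 0%nat) n.

Definition Omega (n : nat) : nat :=
  sumN (fun p => if primeb p then vp p n else 0%nat) n.

Fixpoint rising (x : R) (a : nat) : R :=
  match a with
  | O => 1
  | S a' => rising x a' * (x + INR a')
  end.

(* generalized divisor function d_k (k real): multiplicative with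
   d_k(p^a) = k(k+1)...(k+a-1)/a!, i.e. the coefficients of zeta(s)^k
   = prod_p (1 - p^{-s})^{-k}. *)
Definition dk (k : R) (n : nat) : R :=
  prodR (fun p => if primeb p then rising k (vp p n) / INR (fact (vp p n)) else 1) n.

Definition multiplicative (f : nat -> R) : Prop :=
  f 1%nat = 1 /\
  forall m n : nat, (1 <= m)%nat -> (1 <= n)%nat ->
    Nat.gcd m n = 1%nat -> f (m * n)%nat = f m * f n.

Definition smoothb (X : R) (n : nat) : bool :=
  forallb (fun p => if primeb p && Nat.eqb (n mod p) 0
                    then (if Rle_dec (INR p) X then true else false) else true)
          (seq 0 (S n)).

Definition V0 (T : R) : R := ln (ln T) * ln (ln (ln T)).
Definition W0 (k T : R) : R := 20 * Rabs k * V0 T.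

Definition half_it (t : R) : C := (1/2, t).

Definition F (X t : R) : C :=
  sumC (fun n => if Nat.leb 1 n then
                   if Rle_dec (INR n) X
                   then Cmult (RtoC (Lambda n / ln (INR n))) (npow_neg n (half_it t))
                   else RtoC 0
                 else RtoC 0) (Z.to_nat (up X)).

(* P_X(1/2+it)^k := exp(k * sum_{n<=X} Lambda(n)/(n^{1/2+it} log n)) *)
Definition PX_pow (X k t : R) : C := Cexp (Cmult (RtoC k) (F X t)).

Definition inS (T X t : R) : Prop :=
  T <= t <= 2 * T /\ Rabs (Re (F X t)) <= V0 T /\ Rabs (Im (F X t)) <= V0 T.

Definition Dtk (X T k t : R) : C :=
  sumC (fun j => if Rle_dec (INR j) (W0 k T)
                 then Cmult (RtoC (k ^ j / INR (fact j))) (pow_n (F X t) j)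
                 else RtoC 0) (Z.to_nat (up (W0 k T))).

(* coefficients of F(t)^j as a Dirichlet polynomial:
   coefficient c(d) = Lambda(d)/log d for 1 <= d <= X, and
   a_0 = delta_1, a_{j+1}(n) = sum_{d | n} c(d) a_j(n/d). *)
Definition cF (X : R) (d : nat) : R :=
  if Nat.leb 1 d then (if Rle_dec (INR d) X then Lambda d / ln (INR d) else 0) else 0.

Fixpoint aF (X : R) (j n : nat) : R :=
  match j with
  | O => if Nat.eqb n 1 then 1 else 0
  | S j' => sumR (fun d => if Nat.leb 1 d && Nat.eqb (n mod d) 0
                           then cF X d * aF X j' (n / d) else 0) n
  end.

(* alpha_k(n): coefficients of D(t,k) = sum_n alpha_k(n) n^{-1/2-it} *)
Definition alpha (X T k : R) (n : nat) : R :=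
  sumR (fun j => if Rle_dec (INR j) (W0 k T)
                 then k ^ j / INR (fact j) * aF X j n else 0) (Z.to_nat (up (W0 k T))).

(* Main.v *)
Require Import Defs.
From Stdlib Require Import Reals ZArith Znumtheory.
From Coquelicot Require Import Coquelicot.
From Stdlib Require Import Lia Lra List Classical Bool.
Import ListNotations.
Open Scope R_scope.

Section GS.
Context {G : AbelianMonoid}.

Lemma sn_zero (f : nat -> G) N : (forall i, (i <= N)%nat -> f i = zero) -> sum_n f N = zero.
Proof.
  induction N; intros H.
  - rewrite sum_O. apply H; lia.
  - rewrite sum_Sn, IHN, (H (S N)) by (auto; intros; apply H; lia). apply plus_zero_l.
Qed.

Lemma sn_extend (f : nat -> G) N M : (N <= M)%nat ->
  (forall i, (N < i <= M)%nat -> f i = zero) -> sum_n f M = sum_n f N.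
Proof.
  induction M; intros HNM H.
  - replace N with 0%nat by lia. reflexivity.
  - destruct (Nat.eq_dec N (S M)). subst; reflexivity.
    rewrite sum_Sn, IHM, (H (S M)) by (try lia; intros; apply H; lia). apply plus_zero_r.
Qed.

Lemma sn_single (f : nat -> G) N i0 : (i0 <= N)%nat ->
  (forall i, (i <= N)%nat -> i <> i0 -> f i = zero) -> sum_n f N = f i0.
Proof.
  induction N; intros H0 H.
  - rewrite sum_O. f_equal; lia.
  - destruct (Nat.eq_dec i0 (S N)).
    + subst. rewrite sum_Sn, sn_zero. apply plus_zero_l. intros; apply H; lia.
    + rewrite sum_Sn, IHN, (H (S N)) by (try lia; intros; apply H; lia). apply plus_zero_r.
Qed.

Lemma sn_shift (f : nat -> G) N :
  sum_n f (S N) = plus (f 0%nat) (sum_n (fun i => f (S i)) N).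
Proof.
  induction N.
  - rewrite sum_Sn, !sum_O. reflexivity.
  - rewrite sum_Sn, IHN, sum_Sn. symmetry; apply plus_assoc.
Qed.

Lemma sn_triangle (g : nat -> nat -> G) N :
  sum_n (fun j => sum_n (fun i => g i (j - i)%nat) j) N =
  sum_n (fun i => sum_n (fun l => g i l) (N - i)) N.
Proof.
  induction N.
  - rewrite !sum_O. reflexivity.
  - rewrite sum_Sn, IHN.
    rewrite (sum_Sn (fun i => sum_n (fun l => g i l) (S N - i))).
    replace (S N - S N)%nat with 0%nat by lia.
    rewrite (sum_n_ext_loc (fun i => sum_n (fun l => g i l) (S N - i))
      (fun i => plus (sum_n (fun l => g i l) (N - i)) (g i (S N - i)%nat))).
    2:{ intros n Hn. replace (S N - n)%nat with (S (N - n)) by lia. rewrite sum_Sn. do 2 f_equal. }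
    rewrite sum_n_plus. rewrite sum_Sn. replace (S N - S N)%nat with 0%nat by lia.
    rewrite <- plus_assoc, sum_O. reflexivity.
Qed.

Lemma sn_reindex (f : nat -> G) (g : nat -> nat) N M :
  (forall m, (m <= M)%nat -> (g m <= N)%nat) ->
  (forall m1 m2, (m1 <= M)%nat -> (m2 <= M)%nat -> g m1 = g m2 -> m1 = m2) ->
  (forall d, (d <= N)%nat -> f d <> zero -> exists m, (m <= M)%nat /\ d = g m) ->
  sum_n f N = sum_n (fun m => f (g m)) M.
Proof.
  intros Hb Hi Hs.
  transitivity (sum_n (fun d => sum_n (fun m => if Nat.eq_dec d (g m) then f d else zero) M) N).
  - apply sum_n_ext_loc. intros d Hd.
    destruct (classic (f d = zero)) as [Hz|Hz].
    + rewrite Hz. symmetry. apply sn_zero. intros. destruct Nat.eq_dec; reflexivity.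
    + destruct (Hs d Hd Hz) as [m [Hm ->]].
      rewrite (sn_single _ M m Hm). destruct Nat.eq_dec; congruence.
      intros i Hi1 Hi2. destruct Nat.eq_dec; [|reflexivity]. exfalso. apply Hi2. apply Hi; auto.
  - rewrite sum_n_switch. apply sum_n_ext_loc. intros m Hm.
    rewrite (sn_single _ N (g m)). destruct Nat.eq_dec; congruence. auto.
    intros i _ Hi2. destruct Nat.eq_dec; congruence.
Qed.

End GS.

Lemma fold_Rplus_acc (l : list R) a : fold_right Rplus a l = fold_right Rplus 0 l + a.
Proof. induction l; simpl. lra. rewrite IHl. lra. Qed.
Lemma fold_Rmult_acc (l : list R) a : fold_right Rmult a l = fold_right Rmult 1 l * a.
Proof. induction l; simpl. lra. rewrite IHl. lra. Qed.
Lemma fold_Cplus_acc (l : list C) a : fold_right Cplus a l = Cplus (fold_right Cplus (RtoC 0) l) a.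
Proof. induction l; simpl. symmetry; apply Cplus_0_l. rewrite IHl. apply Cplus_assoc. Qed.
Lemma fold_Nadd_acc (l : list nat) a : fold_right Nat.add a l = (fold_right Nat.add 0 l + a)%nat.
Proof. induction l; simpl. lia. rewrite IHl. lia. Qed.

Lemma sumR_S f N : sumR f (S N) = sumR f N + f (S N).
Proof. unfold sumR. rewrite seq_S, map_app, fold_right_app. simpl. rewrite fold_Rplus_acc. simpl. lra. Qed.
Lemma sumR_0 f : sumR f 0 = f 0%nat.
Proof. unfold sumR; simpl; lra. Qed.
Lemma prodR_S f N : prodR f (S N) = prodR f N * f (S N).
Proof. unfold prodR. rewrite seq_S, map_app, fold_right_app. simpl. rewrite fold_Rmult_acc. simpl. lra. Qed.
Lemma prodR_0 f : prodR f 0 = f 0%nat.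
Proof. unfold prodR; simpl; lra. Qed.
Lemma sumC_S f N : sumC f (S N) = Cplus (sumC f N) (f (S N)).
Proof. unfold sumC. rewrite (seq_S (S N)), map_app, fold_right_app. cbn [map fold_right]. rewrite fold_Cplus_acc. f_equal. apply Cplus_0_r. Qed.
Lemma sumC_0 f : sumC f 0 = f 0%nat.
Proof. unfold sumC; simpl. apply Cplus_0_r. Qed.
Lemma sumN_S f N : sumN f (S N) = (sumN f N + f (S N))%nat.
Proof. unfold sumN. rewrite seq_S, map_app, fold_right_app. simpl. rewrite fold_Nadd_acc. simpl. lia. Qed.
Lemma sumN_0 f : sumN f 0 = f 0%nat.
Proof. unfold sumN; simpl; lia. Qed.

Lemma sumR_sn f N : sumR f N = @sum_n R_AbelianMonoid f N.
Proof. induction N. rewrite sumR_0, sum_O; reflexivity. rewrite sumR_S, sum_Sn, IHN; reflexivity. Qed.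
Lemma sumC_sn f N : sumC f N = @sum_n C_AbelianMonoid f N.
Proof. induction N. rewrite sumC_0, sum_O; reflexivity. rewrite sumC_S, sum_Sn, IHN; reflexivity. Qed.
Lemma INR_sumN f N : INR (sumN f N) = sumR (fun i => INR (f i)) N.
Proof. induction N. rewrite sumN_0, sumR_0; reflexivity. rewrite sumN_S, sumR_S, plus_INR, IHN; reflexivity. Qed.

Lemma sumR_ext f g N : (forall i, (i <= N)%nat -> f i = g i) -> sumR f N = sumR g N.
Proof. intros; rewrite !sumR_sn; apply sum_n_ext_loc; auto. Qed.
Lemma sumR_zero f N : (forall i, (i <= N)%nat -> f i = 0) -> sumR f N = 0.
Proof. intros; rewrite !sumR_sn; apply (sn_zero (G:=R_AbelianMonoid)); auto. Qed.
Lemma sumR_extend f N M : (N <= M)%nat -> (forall i, (N < i <= M)%nat -> f i = 0) -> sumR f M = sumR f N.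
Proof. intros; rewrite !sumR_sn; apply (sn_extend (G:=R_AbelianMonoid)); auto. Qed.
Lemma sumR_supp f N1 N2 K : (K <= N1)%nat -> (K <= N2)%nat -> (forall i, (K < i)%nat -> f i = 0) -> sumR f N1 = sumR f N2.
Proof. intros. rewrite (sumR_extend f K N1), (sumR_extend f K N2); auto; intros; apply H1; lia. Qed.
Lemma sumR_single f N i0 : (i0 <= N)%nat -> (forall i, (i <= N)%nat -> i <> i0 -> f i = 0) -> sumR f N = f i0.
Proof. intros; rewrite !sumR_sn; apply (sn_single (G:=R_AbelianMonoid)); auto. Qed.
Lemma sumR_shift f N : sumR f (S N) = f 0%nat + sumR (fun i => f (S i)) N.
Proof. rewrite !sumR_sn; apply (sn_shift (G:=R_AbelianMonoid)). Qed.
Lemma sumR_plus f g N : sumR (fun i => f i + g i) N = sumR f N + sumR g N.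
Proof. rewrite !sumR_sn; apply (sum_n_plus (G:=R_AbelianMonoid)). Qed.
Lemma sumR_mult_l a f N : sumR (fun i => a * f i) N = a * sumR f N.
Proof. rewrite !sumR_sn; apply (sum_n_mult_l (K:=R_Ring)). Qed.
Lemma sumR_mult_r a f N : sumR (fun i => f i * a) N = sumR f N * a.
Proof. rewrite !sumR_sn; apply (sum_n_mult_r (K:=R_Ring)). Qed.
Lemma sumR_switch (u : nat -> nat -> R) m n :
  sumR (fun i => sumR (u i) n) m = sumR (fun j => sumR (fun i => u i j) m) n.
Proof. rewrite !sumR_sn. rewrite (sum_n_ext (fun i => sumR (u i) n) (fun i => sum_n (u i) n)).
  rewrite sum_n_switch. apply sum_n_ext. intros; rewrite sumR_sn; reflexivity. intros; apply sumR_sn. Qed.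
Lemma sumR_triangle (g : nat -> nat -> R) N :
  sumR (fun j => sumR (fun i => g i (j - i)%nat) j) N = sumR (fun i => sumR (fun l => g i l) (N - i)) N.
Proof.
  rewrite !sumR_sn. rewrite (sum_n_ext _ (fun j => sum_n (fun i => g i (j - i)%nat) j)) by (intros; apply sumR_sn).
  rewrite (sum_n_ext (fun i => sumR _ _) (fun i => sum_n (fun l => g i l) (N - i))) by (intros; apply sumR_sn).
  apply (sn_triangle (G:=R_AbelianMonoid)).
Qed.
Lemma sumR_reindex (f : nat -> R) (g : nat -> nat) N M :
  (forall m, (m <= M)%nat -> (g m <= N)%nat) ->
  (forall m1 m2, (m1 <= M)%nat -> (m2 <= M)%nat -> g m1 = g m2 -> m1 = m2) ->
  (forall d, (d <= N)%nat -> f d <> 0 -> exists m, (m <= M)%nat /\ d = g m) ->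
  sumR f N = sumR (fun m => f (g m)) M.
Proof. intros; rewrite !sumR_sn; apply (sn_reindex (G:=R_AbelianMonoid)); auto. Qed.
Lemma sumR_le f g N : (forall i, (i <= N)%nat -> f i <= g i) -> sumR f N <= sumR g N.
Proof. induction N; intros H. rewrite !sumR_0; auto. rewrite !sumR_S. apply Rplus_le_compat; auto. Qed.
Lemma sumR_nonneg f N : (forall i, (i <= N)%nat -> 0 <= f i) -> 0 <= sumR f N.
Proof. intros H. rewrite <- (sumR_zero (fun _ => 0) N) by auto. apply sumR_le; auto. Qed.
Lemma sumR_abs f N : Rabs (sumR f N) <= sumR (fun i => Rabs (f i)) N.
Proof. induction N. rewrite !sumR_0; lra. rewrite !sumR_S. eapply Rle_trans. apply Rabs_triang. lra. Qed.
Lemma sumR_const_ind N i0 (a : R) : (i0 <= N)%nat -> sumR (fun i => if Nat.eq_dec i i0 then a else 0) N = a.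
Proof. intros. rewrite (sumR_single _ N i0); auto. destruct Nat.eq_dec; congruence. intros. destruct Nat.eq_dec; congruence. Qed.

Lemma prodR_ext f g N : (forall i, (i <= N)%nat -> f i = g i) -> prodR f N = prodR g N.
Proof. induction N; intros H. rewrite !prodR_0; auto. rewrite !prodR_S, IHN, H; auto. Qed.
Lemma prodR_one f N : (forall i, (i <= N)%nat -> f i = 1) -> prodR f N = 1.
Proof. induction N; intros H. rewrite !prodR_0; auto. rewrite !prodR_S, IHN, (H (S N)); auto; lra. Qed.
Lemma prodR_mult f g N : prodR (fun i => f i * g i) N = prodR f N * prodR g N.
Proof. induction N. rewrite !prodR_0; auto. rewrite !prodR_S, IHN; lra. Qed.
Lemma prodR_extend f N M : (N <= M)%nat -> (forall i, (N < i <= M)%nat -> f i = 1) -> prodR f M = prodR f N.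
Proof. induction M; intros HNM H.
  - replace N with 0%nat by lia. reflexivity.
  - destruct (Nat.eq_dec N (S M)). subst; reflexivity.
    rewrite prodR_S, IHM, (H (S M)) by (try lia; intros; apply H; lia). lra. Qed.
Lemma prodR_single f N i0 : (i0 <= N)%nat -> (forall i, (i <= N)%nat -> i <> i0 -> f i = 1) -> prodR f N = f i0.
Proof.
  induction N; intros H0 H.
  - rewrite prodR_0. f_equal; lia.
  - destruct (Nat.eq_dec i0 (S N)).
    + subst. rewrite prodR_S, prodR_one. lra. intros; apply H; lia.
    + rewrite prodR_S, IHN, (H (S N)) by (try lia; intros; apply H; lia). lra.
Qed.
Lemma prodR_abs f N : Rabs (prodR f N) = prodR (fun i => Rabs (f i)) N.
Proof. induction N. rewrite !prodR_0; auto. rewrite !prodR_S, Rabs_mult, IHN; auto. Qed.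
Lemma prodR_nonneg f N : (forall i, (i <= N)%nat -> 0 <= f i) -> 0 <= prodR f N.
Proof. induction N; intros H. rewrite prodR_0; auto. rewrite prodR_S. apply Rmult_le_pos; auto. Qed.
Lemma prodR_le f g N : (forall i, (i <= N)%nat -> 0 <= f i <= g i) -> prodR f N <= prodR g N.
Proof. induction N; intros H. rewrite !prodR_0; apply H; auto. rewrite !prodR_S.
  apply Rmult_le_compat; try apply H; auto. apply prodR_nonneg. intros; apply H; lia. Qed.

Lemma sumC_ext f g N : (forall i, (i <= N)%nat -> f i = g i) -> sumC f N = sumC g N.
Proof. intros; rewrite !sumC_sn; apply sum_n_ext_loc; auto. Qed.
Lemma sumC_zero f N : (forall i, (i <= N)%nat -> f i = RtoC 0) -> sumC f N = RtoC 0.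
Proof. intros; rewrite !sumC_sn; apply (sn_zero (G:=C_AbelianMonoid)); auto. Qed.
Lemma sumC_extend f N M : (N <= M)%nat -> (forall i, (N < i <= M)%nat -> f i = RtoC 0) -> sumC f M = sumC f N.
Proof. intros; rewrite !sumC_sn; apply (sn_extend (G:=C_AbelianMonoid)); auto. Qed.
Lemma sumC_supp f N1 N2 K : (K <= N1)%nat -> (K <= N2)%nat -> (forall i, (K < i)%nat -> f i = RtoC 0) -> sumC f N1 = sumC f N2.
Proof. intros. rewrite (sumC_extend f K N1), (sumC_extend f K N2); auto; intros; apply H1; lia. Qed.
Lemma sumC_plus f g N : sumC (fun i => Cplus (f i) (g i)) N = Cplus (sumC f N) (sumC g N).
Proof. rewrite !sumC_sn; apply (sum_n_plus (G:=C_AbelianMonoid)). Qed.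
Lemma sumC_mult_l a f N : sumC (fun i => Cmult a (f i)) N = Cmult a (sumC f N).
Proof. rewrite !sumC_sn; apply (sum_n_mult_l (K:=C_Ring)). Qed.
Lemma sumC_mult_r a f N : sumC (fun i => Cmult (f i) a) N = Cmult (sumC f N) a.
Proof. rewrite !sumC_sn; apply (sum_n_mult_r (K:=C_Ring)). Qed.
Lemma sumC_switch (u : nat -> nat -> C) m n :
  sumC (fun i => sumC (u i) n) m = sumC (fun j => sumC (fun i => u i j) m) n.
Proof. rewrite !sumC_sn. rewrite (sum_n_ext (fun i => sumC (u i) n) (fun i => sum_n (u i) n)).
  rewrite sum_n_switch. apply sum_n_ext. intros; rewrite sumC_sn; reflexivity. intros; apply sumC_sn. Qed.
Lemma sumC_reindex (f : nat -> C) (g : nat -> nat) N M :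
  (forall m, (m <= M)%nat -> (g m <= N)%nat) ->
  (forall m1 m2, (m1 <= M)%nat -> (m2 <= M)%nat -> g m1 = g m2 -> m1 = m2) ->
  (forall d, (d <= N)%nat -> f d <> RtoC 0 -> exists m, (m <= M)%nat /\ d = g m) ->
  sumC f N = sumC (fun m => f (g m)) M.
Proof. intros; rewrite !sumC_sn; apply (sn_reindex (G:=C_AbelianMonoid)); auto. Qed.
Lemma sumC_Re f N : Re (sumC f N) = sumR (fun i => Re (f i)) N.
Proof. induction N. rewrite sumC_0, sumR_0; auto. rewrite sumC_S, sumR_S, <- IHN. reflexivity. Qed.
Lemma sumC_Im f N : Im (sumC f N) = sumR (fun i => Im (f i)) N.
Proof. induction N. rewrite sumC_0, sumR_0; auto. rewrite sumC_S, sumR_S, <- IHN. reflexivity. Qed.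

Definition isp (p : nat) : Prop := prime (Z.of_nat p).

Lemma primeb_isp p : primeb p = true <-> isp p.
Proof. unfold primeb, isp. destruct prime_dec; split; auto; discriminate. Qed.
Lemma primeb_nisp p : primeb p = false <-> ~ isp p.
Proof. unfold primeb, isp. destruct prime_dec; split; auto; try discriminate; tauto. Qed.

Lemma div_N2Z a b : Nat.divide a b -> Z.divide (Z.of_nat a) (Z.of_nat b).
Proof. intros [c ->]. exists (Z.of_nat c). lia. Qed.
Lemma div_Z2N a b : Z.divide (Z.of_nat a) (Z.of_nat b) -> Nat.divide a b.
Proof.
  intros [c Hc]. destruct (Nat.eq_dec a 0).
  - subst. exists 0%nat. lia.
  - assert (0 <= c)%Z by nia. exists (Z.to_nat c). apply Nat2Z.inj. rewrite Nat2Z.inj_mul, Z2Nat.id; lia.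
Qed.

Lemma isp_ge2 p : isp p -> (2 <= p)%nat.
Proof. intros H. apply prime_ge_2 in H. lia. Qed.

Lemma isp_mult p a b : isp p -> Nat.divide p (a * b) -> Nat.divide p a \/ Nat.divide p b.
Proof. intros H Hd. apply div_N2Z in Hd. rewrite Nat2Z.inj_mul in Hd.
  destruct (prime_mult _ H _ _ Hd); [left|right]; apply div_Z2N; auto. Qed.

Lemma isp_div_isp p q : isp p -> isp q -> Nat.divide p q -> p = q.
Proof. intros Hp Hq Hd. apply div_N2Z in Hd. apply Nat2Z.inj. apply prime_div_prime; auto. Qed.

Lemma isp_div_pow p q e : isp p -> isp q -> Nat.divide p (q ^ e) -> p = q.
Proof.
  intros Hp Hq. induction e; simpl; intros Hd.
  - apply Nat.divide_1_r in Hd. apply isp_ge2 in Hp. lia.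
  - destruct (isp_mult _ _ _ Hp Hd). apply isp_div_isp; auto. auto.
Qed.

Lemma prime_divisor_exists n : (2 <= n)%nat -> exists q, isp q /\ Nat.divide q n.
Proof.
  induction n as [n IH] using (well_founded_induction lt_wf). intros Hn.
  destruct (prime_dec (Z.of_nat n)) as [Hp|Hp].
  - exists n. split; auto. apply Nat.divide_refl.
  - destruct (not_prime_divide (Z.of_nat n)) as [m [Hm Hd]]; [lia|auto|].
    assert (Hd' : Nat.divide (Z.to_nat m) n) by (apply div_Z2N; rewrite Z2Nat.id; auto; lia).
    destruct (IH (Z.to_nat m)) as [q [Hq Hq2]]; try lia.
    exists q. split; auto. eapply Nat.divide_trans; eauto.
Qed.

Lemma pow_pos_nat p a : (1 <= p)%nat -> (1 <= p ^ a)%nat.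
Proof. intros. induction a; simpl; nia. Qed.

Lemma lt_pow2 p a : (2 <= p)%nat -> (a < p ^ a)%nat.
Proof. intros. induction a; simpl; nia. Qed.

Lemma coprime_pow p m a : isp p -> ~ Nat.divide p m -> Nat.gcd (p ^ a) m = 1%nat.
Proof.
  intros Hp Hm. set (g := Nat.gcd (p ^ a) m).
  destruct (Nat.eq_dec g 0) as [H0|H0].
  - exfalso. apply Nat.gcd_eq_0 in H0. destruct H0 as [_ ->]. apply Hm. exists 0%nat. lia.
  - destruct (Nat.eq_dec g 1) as [|H1]; auto. exfalso.
    destruct (prime_divisor_exists g) as [q [Hq Hqg]]; [lia|].
    assert (Nat.divide q (p ^ a)) by (apply (Nat.divide_trans q g _ Hqg (Nat.gcd_divide_l _ _))).
    assert (Nat.divide q m) by (apply (Nat.divide_trans q g _ Hqg (Nat.gcd_divide_r _ _))).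
    assert (q = p) by (eapply isp_div_pow; eauto). subst. auto.
Qed.

Lemma gcd_div_l m n d : Nat.gcd m n = 1%nat -> Nat.divide d m -> Nat.gcd d n = 1%nat.
Proof.
  intros H Hd. apply Nat.divide_1_r. rewrite <- H. apply Nat.gcd_greatest.
  eapply Nat.divide_trans; [apply Nat.gcd_divide_l| auto]. apply Nat.gcd_divide_r.
Qed.
Lemma gcd_div_r m n d : Nat.gcd m n = 1%nat -> Nat.divide d n -> Nat.gcd m d = 1%nat.
Proof. intros. rewrite Nat.gcd_comm. apply (gcd_div_l n m d); auto. rewrite Nat.gcd_comm; auto. Qed.

Lemma decomp p n : isp p -> (1 <= n)%nat -> exists v m, n = (p ^ v * m)%nat /\ ~ Nat.divide p m /\ (1 <= m)%nat.
Proof.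
  intros Hp. induction n as [n IH] using (well_founded_induction lt_wf). intros Hn.
  pose proof (isp_ge2 _ Hp).
  destruct (classic (Nat.divide p n)) as [[c Hc]|Hd].
  - destruct (IH c) as [v [m [H1 [H2 H3]]]]; try nia.
    exists (S v), m. split; auto. subst. simpl. nia.
  - exists 0%nat, n. simpl. split; [lia|auto].
Qed.

Lemma pow_div_iff p v m a : isp p -> ~ Nat.divide p m ->
  Nat.divide (p ^ a) (p ^ v * m) <-> (a <= v)%nat.
Proof.
  intros Hp Hm. pose proof (isp_ge2 _ Hp). split; intros H0.
  - destruct (le_lt_dec a v) as [|Hlt]; auto. exfalso. apply Hm.
    assert (Hd : Nat.divide (p ^ v * p) (p ^ v * m)).
    { eapply Nat.divide_trans; [|apply H0]. exists (p ^ (a - S v))%nat.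
      replace a with (a - S v + v + 1)%nat at 1 by lia. rewrite !Nat.pow_add_r. simpl. lia. }
    apply Nat.mul_divide_cancel_l in Hd; auto. pose proof (pow_pos_nat p v). lia.
  - exists (p ^ (v - a) * m)%nat. replace v with (v - a + a)%nat at 1 by lia. rewrite Nat.pow_add_r. lia.
Qed.

Lemma dvb_iff d n : (1 <= d)%nat -> (Nat.eqb (n mod d) 0 = true <-> Nat.divide d n).
Proof. intros. rewrite Nat.eqb_eq. apply Nat.mod_divide. lia. Qed.

Lemma count_lemma v n : (v <= n)%nat ->
  sumR (fun a => INR (if Nat.ltb 0 a && Nat.leb a v then 1%nat else 0%nat)) n = INR v.
Proof.
  intros H. rewrite (sumR_extend _ v n); auto.
  2:{ intros i Hi. destruct (Nat.leb_spec i v); try lia. rewrite andb_false_r. reflexivity. }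
  clear H. induction v.
  - rewrite sumR_0. reflexivity.
  - rewrite sumR_S. rewrite (sumR_ext _ (fun a => INR (if Nat.ltb 0 a && Nat.leb a v then 1%nat else 0%nat))).
    rewrite IHv. simpl (Nat.ltb 0 (S v)). rewrite Nat.leb_refl. rewrite S_INR. simpl. lra.
    intros i Hi. destruct (Nat.leb_spec i v), (Nat.leb_spec i (S v)); try lia; reflexivity.
Qed.

Lemma vp_spec p v m : isp p -> ~ Nat.divide p m -> (1 <= m)%nat -> vp p (p ^ v * m) = v.
Proof.
  intros Hp Hm Hm1. apply INR_eq. unfold vp. rewrite INR_sumN.
  pose proof (isp_ge2 _ Hp). pose proof (lt_pow2 p v H).
  rewrite <- (count_lemma v (p ^ v * m)) by nia.
  apply sumR_ext. intros a Ha. f_equal.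
  destruct (Nat.ltb_spec 0 a); simpl; auto.
  pose proof (pow_pos_nat p a ltac:(lia)).
  destruct (Nat.eqb ((p ^ v * m) mod p ^ a) 0) eqn:E.
  - apply dvb_iff in E; auto. apply pow_div_iff in E; auto. apply Nat.leb_le in E. rewrite E; auto.
  - destruct (Nat.leb_spec a v); auto. exfalso.
    assert (Nat.divide (p ^ a) (p ^ v * m)) by (apply pow_div_iff; auto).
    apply dvb_iff in H4; auto. congruence.
Qed.

Lemma vp_ndiv p n : isp p -> ~ Nat.divide p n -> (1 <= n)%nat -> vp p n = 0%nat.
Proof. intros. replace n with (p ^ 0 * n)%nat by (simpl; lia). apply vp_spec; auto. Qed.

Lemma vp_pow p a : isp p -> vp p (p ^ a) = a.
Proof. intros. replace (p ^ a)%nat with (p ^ a * 1)%nat by lia. apply vp_spec; auto.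
  intros Hd. apply Nat.divide_1_r in Hd. apply isp_ge2 in H. lia. Qed.

Lemma vp_mul p m n : isp p -> (1 <= m)%nat -> (1 <= n)%nat -> vp p (m * n) = (vp p m + vp p n)%nat.
Proof.
  intros Hp Hm Hn.
  destruct (decomp p m Hp Hm) as [u [m' [-> [Hm1 Hm2]]]].
  destruct (decomp p n Hp Hn) as [v [n' [-> [Hn1 Hn2]]]].
  rewrite !vp_spec; auto.
  replace (p ^ u * m' * (p ^ v * n'))%nat with (p ^ (u + v) * (m' * n'))%nat by (rewrite Nat.pow_add_r; lia).
  rewrite vp_spec; auto. intros Hd. destruct (isp_mult _ _ _ Hp Hd); auto. lia.
Qed.

Lemma vp_le p n : isp p -> (1 <= n)%nat -> (vp p n < n)%nat \/ False.
Proof.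
  intros Hp Hn. left. destruct (decomp p n Hp Hn) as [u [m' [-> [Hm1 Hm2]]]].
  rewrite vp_spec; auto. pose proof (lt_pow2 p u (isp_ge2 _ Hp)). nia.
Qed.

Lemma vp_big p n : isp p -> (1 <= n)%nat -> (n < p)%nat -> vp p n = 0%nat.
Proof. intros. apply vp_ndiv; auto. intros Hd. apply Nat.divide_pos_le in Hd; lia. Qed.

Lemma pp_unique p q m e : isp p -> isp q -> (1 <= m)%nat -> (p ^ m = q ^ e)%nat -> p = q /\ m = e.
Proof.
  intros Hp Hq Hm H.
  assert (p = q). { apply (isp_div_pow p q e); auto. rewrite <- H. exists (p ^ (m - 1))%nat.
    replace m with (m - 1 + 1)%nat at 1 by lia. rewrite Nat.pow_add_r. simpl. lia. }
  subst. split; auto. apply Nat.pow_inj_r in H; auto. apply isp_ge2 in Hq; lia.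
Qed.

Lemma pow_ge_base q e : (1 <= q)%nat -> (1 <= e)%nat -> (q <= q ^ e)%nat.
Proof. intros. assert (q ^ 1 <= q ^ e)%nat by (apply Nat.pow_le_mono_r; lia). simpl in H1. lia. Qed.

Lemma sumR_nz f N : sumR f N <> 0 -> exists i, (i <= N)%nat /\ f i <> 0.
Proof.
  intros H. destruct (classic (exists i, (i <= N)%nat /\ f i <> 0)) as [|Hn]; auto.
  exfalso. apply H. apply sumR_zero. intros i Hi. destruct (Req_dec (f i) 0); auto.
  exfalso; apply Hn; eauto.
Qed.

Lemma Lambda_pp q e : isp q -> (1 <= e)%nat -> Lambda (q ^ e) = ln (INR q).
Proof.
  intros Hq He. pose proof (isp_ge2 _ Hq). pose proof (lt_pow2 q e H).
  unfold Lambda. rewrite (sumR_single _ _ q).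
  - rewrite (sumR_single _ _ e); try lia.
    + replace (primeb q) with true by (symmetry; apply primeb_isp; auto).
      replace (Nat.ltb 0 e) with true by (symmetry; apply Nat.ltb_lt; lia).
      rewrite Nat.eqb_refl. reflexivity.
    + intros m _ Hm. destruct (primeb q && Nat.ltb 0 m && Nat.eqb (q ^ m) (q ^ e)) eqn:E; auto.
      apply andb_prop in E as [_ E]. apply Nat.eqb_eq in E. apply Nat.pow_inj_r in E; lia.
  - assert (q ^ 1 <= q ^ e)%nat by (apply Nat.pow_le_mono_r; lia). simpl in H1. lia.
  - intros p _ Hp. apply sumR_zero. intros m _.
    destruct (primeb p && Nat.ltb 0 m && Nat.eqb (p ^ m) (q ^ e)) eqn:E; auto.
    apply andb_prop in E as [E E3]. apply andb_prop in E as [E1 E2].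
    apply primeb_isp in E1. apply Nat.ltb_lt in E2. apply Nat.eqb_eq in E3.
    destruct (pp_unique p q m e); auto; lia.
Qed.

Definition is_pp (d : nat) := exists q e, isp q /\ (1 <= e)%nat /\ d = (q ^ e)%nat.

Lemma Lambda_npp n : ~ is_pp n -> Lambda n = 0.
Proof.
  intros Hn. unfold Lambda. apply sumR_zero. intros p _. apply sumR_zero. intros m _.
  destruct (primeb p && Nat.ltb 0 m && Nat.eqb (p ^ m) n) eqn:E; auto.
  apply andb_prop in E as [E E3]. apply andb_prop in E as [E1 E2].
  apply primeb_isp in E1. apply Nat.ltb_lt in E2. apply Nat.eqb_eq in E3.
  exfalso. apply Hn. exists p, m. split; [auto|split; lia].
Qed.

Lemma ln_INR_pos q : (2 <= q)%nat -> 0 < ln (INR q).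
Proof. intros. rewrite <- ln_1. apply ln_increasing; [lra|]. apply lt_1_INR. lia. Qed.

Lemma cF_pp X q e : isp q -> (1 <= e)%nat ->
  cF X (q ^ e) = if Rle_dec (INR (q ^ e)) X then / INR e else 0.
Proof.
  intros Hq He. pose proof (isp_ge2 _ Hq). unfold cF.
  replace (Nat.leb 1 (q ^ e)) with true by (symmetry; apply Nat.leb_le; apply pow_pos_nat; lia).
  destruct Rle_dec; auto. rewrite Lambda_pp; auto. rewrite pow_INR, ln_pow.
  2:{ apply lt_0_INR; lia. }
  pose proof (ln_INR_pos q H). assert (0 < INR e) by (apply lt_0_INR; lia). field. lra.
Qed.

Lemma cF_npp X d : ~ is_pp d -> cF X d = 0.
Proof. intros H. unfold cF. rewrite Lambda_npp; auto. destruct Nat.leb; [destruct Rle_dec|]; auto. unfold Rdiv; ring. Qed.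

Lemma cF_cases X d : cF X d <> 0 -> exists q e, isp q /\ (1 <= e)%nat /\ d = (q ^ e)%nat /\ INR d <= X.
Proof.
  intros H. destruct (classic (is_pp d)) as [[q [e [Hq [He ->]]]]|Hn].
  - exists q, e. split; [auto|split;[auto|split;[auto|]]]. rewrite cF_pp in H; auto. destruct Rle_dec; auto. lra.
  - exfalso. apply H. apply cF_npp; auto.
Qed.

Lemma cF_nonneg X d : 0 <= cF X d.
Proof.
  destruct (classic (is_pp d)) as [[q [e [Hq [He ->]]]]|Hn].
  - rewrite cF_pp; auto. destruct Rle_dec; [|lra]. left. apply Rinv_0_lt_compat, lt_0_INR; lia.
  - rewrite cF_npp; auto; lra.
Qed.

Lemma cF_le X d : X < INR d -> cF X d = 0.
Proof. intros. unfold cF. destruct Nat.leb; [destruct Rle_dec|]; auto. lra. Qed.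

Lemma cF_1 X : cF X 1 = 0.
Proof. apply cF_npp. intros [q [e [Hq [He H]]]]. pose proof (isp_ge2 _ Hq).
  assert (q ^ 1 <= q ^ e)%nat by (apply Nat.pow_le_mono_r; lia). simpl in H1. lia. Qed.

Lemma cF_0 X : cF X 0 = 0.
Proof. reflexivity. Qed.

Lemma aF_S X j n : aF X (S j) n = sumR (fun d => if Nat.leb 1 d && Nat.eqb (n mod d) 0
                           then cF X d * aF X j (n / d) else 0) n.
Proof. reflexivity. Qed.

Lemma aF_nonneg X j n : 0 <= aF X j n.
Proof.
  revert n; induction j; intros n; simpl.
  - destruct Nat.eqb; lra.
  - apply sumR_nonneg. intros d _. destruct (_ && _); [|lra]. apply Rmult_le_pos; auto. apply cF_nonneg.
Qed.

Lemma aF_0 X j : aF X j 0 = 0.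
Proof. destruct j; simpl. reflexivity. rewrite sumR_0. reflexivity. Qed.

Lemma Omega_ext n N : (1 <= n)%nat -> (n <= N)%nat ->
  INR (Omega n) = sumR (fun p => INR (if primeb p then vp p n else 0%nat)) N.
Proof.
  intros. unfold Omega. rewrite INR_sumN. symmetry. apply sumR_extend; auto.
  intros i Hi. destruct (primeb i) eqn:E; auto. apply primeb_isp in E. rewrite vp_big; auto. lia.
Qed.

Lemma Omega_mul m n : (1 <= m)%nat -> (1 <= n)%nat -> Omega (m * n) = (Omega m + Omega n)%nat.
Proof.
  intros. apply INR_eq. rewrite plus_INR.
  rewrite (Omega_ext (m * n) (m * n)), (Omega_ext m (m * n)), (Omega_ext n (m * n)); try nia.
  rewrite <- sumR_plus. apply sumR_ext. intros p _. destruct (primeb p) eqn:E; simpl; [|lra].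
  apply primeb_isp in E. rewrite vp_mul, plus_INR; auto.
Qed.

Lemma Omega_pp q e : isp q -> Omega (q ^ e) = e.
Proof.
  intros Hq. pose proof (isp_ge2 _ Hq). apply INR_eq.
  rewrite (Omega_ext (q ^ e) (q ^ e)); try lia. 2: apply pow_pos_nat; lia.
  destruct e.
  - simpl. unfold sumR. simpl. lra.
  - rewrite (sumR_single _ _ q).
    + replace (primeb q) with true by (symmetry; apply primeb_isp; auto). rewrite vp_pow; auto.
    + assert (q ^ 1 <= q ^ S e)%nat by (apply Nat.pow_le_mono_r; lia). simpl in *. lia.
    + intros p _ Hp. destruct (primeb p) eqn:E; auto. apply primeb_isp in E.
      rewrite vp_ndiv; auto. intros Hd. apply Hp. eapply isp_div_pow; eauto. apply pow_pos_nat; lia.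
Qed.

Definition smooth_prop (X : R) (n : nat) := forall p, isp p -> Nat.divide p n -> INR p <= X.

Lemma aF_supp X j n : aF X j n <> 0 ->
  (1 <= n)%nat /\ (2 ^ j <= n)%nat /\ INR n <= X ^ j /\ (j <= Omega n)%nat /\ smooth_prop X n.
Proof.
  revert n; induction j; intros n H.
  - simpl in H. destruct (Nat.eqb_spec n 1); [|lra]. subst. simpl. repeat split; try lia; try lra.
    + intros p Hp Hd. apply Nat.divide_1_r in Hd. apply isp_ge2 in Hp. lia.
  - rewrite aF_S in H. apply sumR_nz in H. destruct H as [d [Hd H]].
    destruct (Nat.leb 1 d && Nat.eqb (n mod d) 0) eqn:E; [|lra].
    apply andb_prop in E as [E1 E2]. apply Nat.leb_le in E1. apply dvb_iff in E2; auto.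
    assert (Hc : cF X d <> 0) by (intro Hc; rewrite Hc in H; lra).
    assert (Ha : aF X j (n / d) <> 0) by (intro Ha; rewrite Ha in H; lra).
    destruct (cF_cases X d Hc) as [q [e [Hq [He [Hde HdX]]]]].
    destruct (IHj _ Ha) as [H1 [H2 [H3 [H4 H5]]]].
    destruct E2 as [c Hc']. assert (Hcd : (n / d = c)%nat) by (rewrite Hc'; apply Nat.div_mul; lia).
    rewrite Hcd in *. pose proof (isp_ge2 _ Hq).
    assert (2 <= d)%nat. { subst d. pose proof (pow_ge_base q e ltac:(lia) He). lia. }
    repeat split.
    + nia.
    + simpl. nia.
    + rewrite Hc', mult_INR. simpl. rewrite Rmult_comm. apply Rmult_le_compat; auto; apply pos_INR.
    + rewrite Hc', Omega_mul by lia. subst d. rewrite Omega_pp; auto. lia.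
    + intros p Hp Hpd. rewrite Hc' in Hpd. destruct (isp_mult _ _ _ Hp Hpd) as [Hp1|Hp1]; auto.
      subst d. assert (p = q) by (eapply isp_div_pow; eauto). subst p.
      eapply Rle_trans; [|apply HdX]. apply le_INR. apply pow_ge_base; lia.
Qed.

Lemma aF_vanish X j n : (1 <= n)%nat -> (n <= j)%nat -> aF X j n = 0.
Proof.
  intros. destruct (Req_dec (aF X j n) 0); auto. apply aF_supp in H1. destruct H1 as [_ [H1 _]].
  assert (j < 2 ^ j)%nat by (apply lt_pow2; lia). lia.
Qed.

Definition ah X j n := aF X j n / INR (fact j).

Lemma INR_fact_pos j : 0 < INR (fact j).
Proof. apply lt_0_INR. apply lt_O_fact. Qed.

Lemma ah_S X j n : INR (S j) * ah X (S j) n =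
  sumR (fun d => if Nat.leb 1 d && Nat.eqb (n mod d) 0 then cF X d * ah X j (n / d) else 0) n.
Proof.
  unfold ah. rewrite aF_S. rewrite fact_simpl, mult_INR.
  transitivity (sumR (fun d => (if Nat.leb 1 d && Nat.eqb (n mod d) 0 then cF X d * aF X j (n / d) else 0) * / INR (fact j)) n).
  - rewrite sumR_mult_r. pose proof (INR_fact_pos j). assert (0 < INR (S j)) by (apply lt_0_INR; lia). field. lra.
  - apply sumR_ext. intros. destruct (_ && _); unfold Rdiv; ring.
Qed.

Lemma ah_nonneg X j n : 0 <= ah X j n.
Proof. unfold ah. apply Rmult_le_pos. apply aF_nonneg. left; apply Rinv_0_lt_compat, INR_fact_pos. Qed.

Lemma ah_vanish X j n : (1 <= n)%nat -> (n <= j)%nat -> ah X j n = 0.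
Proof. intros. unfold ah. rewrite aF_vanish; auto. unfold Rdiv; ring. Qed.

Lemma ah_0 X j : ah X j 0 = 0.
Proof. unfold ah. rewrite aF_0. unfold Rdiv; ring. Qed.

Lemma dvb_true d n : (1 <= d)%nat -> Nat.divide d n -> Nat.eqb (n mod d) 0 = true.
Proof. intros. apply dvb_iff; auto. Qed.
Lemma dvb_false d n : (1 <= d)%nat -> ~ Nat.divide d n -> Nat.eqb (n mod d) 0 = false.
Proof. intros. destruct (Nat.eqb (n mod d) 0) eqn:E; auto. apply dvb_iff in E; tauto. Qed.

Lemma split_sum X (H : nat -> R) m n : (1 <= m)%nat -> (1 <= n)%nat -> Nat.gcd m n = 1%nat ->
  sumR (fun d => if Nat.leb 1 d && Nat.eqb ((m * n) mod d) 0 then cF X d * H ((m * n) / d)%nat else 0) (m * n) =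
  sumR (fun d => if Nat.leb 1 d && Nat.eqb (m mod d) 0 then cF X d * H ((m / d) * n)%nat else 0) m +
  sumR (fun d => if Nat.leb 1 d && Nat.eqb (n mod d) 0 then cF X d * H (m * (n / d))%nat else 0) n.
Proof.
  intros Hm Hn Hg.
  rewrite <- (sumR_extend _ m (m * n)) by (try nia; intros d Hd; destruct (Nat.leb_spec 1 d); simpl; auto;
     rewrite dvb_false; auto; intros Hdv; apply Nat.divide_pos_le in Hdv; lia).
  rewrite <- (sumR_extend _ n (m * n)) by (try nia; intros d Hd; destruct (Nat.leb_spec 1 d); simpl; auto;
     rewrite dvb_false; auto; intros Hdv; apply Nat.divide_pos_le in Hdv; lia).
  rewrite <- sumR_plus. apply sumR_ext. intros d Hd.
  destruct (Nat.leb_spec 1 d) as [Hd1|Hd1]; simpl; [|lra].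
  destruct (Req_dec (cF X d) 0) as [Hc|Hc].
  { rewrite Hc. destruct (Nat.eqb _ 0), (Nat.eqb _ 0), (Nat.eqb _ 0); lra. }
  destruct (cF_cases X d Hc) as [q [e [Hq [He [Hde _]]]]].
  destruct (classic (Nat.divide q m)) as [Hqm|Hqm].
  - assert (Hqn : ~ Nat.divide q n).
    { intros Hqn. assert (Nat.divide q 1) by (rewrite <- Hg; apply Nat.gcd_greatest; auto).
      apply Nat.divide_1_r in H0. apply isp_ge2 in Hq. lia. }
    assert (Hdn : ~ Nat.divide d n).
    { intros Hdn. apply Hqn. eapply Nat.divide_trans; [|apply Hdn]. subst d. exists (q ^ (e - 1))%nat.
      replace e with (e - 1 + 1)%nat at 1 by lia. rewrite Nat.pow_add_r. simpl. lia. }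
    rewrite (dvb_false d n) by auto.
    assert (Hgd : Nat.gcd d n = 1%nat) by (subst d; apply coprime_pow; auto).
    destruct (classic (Nat.divide d m)) as [Hdm|Hdm].
    + rewrite (dvb_true d m) by auto. rewrite dvb_true by (auto; apply Nat.divide_mul_l; auto).
      destruct Hdm as [c ->]. rewrite Nat.div_mul by lia.
      replace (c * d * n)%nat with (c * n * d)%nat by lia. rewrite Nat.div_mul by lia. lra.
    + rewrite (dvb_false d m) by auto. rewrite dvb_false; auto. lra.
      intros Hdv. apply Hdm. apply (Nat.gauss d n m); auto. rewrite Nat.mul_comm; auto.
  - assert (Hdm : ~ Nat.divide d m).
    { intros Hdm. apply Hqm. eapply Nat.divide_trans; [|apply Hdm]. subst d. exists (q ^ (e - 1))%nat.
      replace e with (e - 1 + 1)%nat at 1 by lia. rewrite Nat.pow_add_r. simpl. lia. }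
    rewrite (dvb_false d m) by auto.
    assert (Hgd : Nat.gcd d m = 1%nat) by (subst d; apply coprime_pow; auto).
    destruct (classic (Nat.divide d n)) as [Hdn|Hdn].
    + rewrite (dvb_true d n) by auto. rewrite dvb_true by (auto; apply Nat.divide_mul_r; auto).
      destruct Hdn as [c ->]. rewrite Nat.div_mul by lia.
      replace (m * (c * d))%nat with (m * c * d)%nat by lia. rewrite Nat.div_mul by lia. lra.
    + rewrite (dvb_false d n) by auto. rewrite dvb_false; auto. lra.
      intros Hdv. apply Hdn. apply (Nat.gauss d m n); auto.
Qed.

Lemma ah_split X j : forall m n, (1 <= m)%nat -> (1 <= n)%nat -> Nat.gcd m n = 1%nat ->
  ah X j (m * n) = sumR (fun i => ah X i m * ah X (j - i) n) j.
Proof.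
  induction j; intros m n Hm Hn Hg.
  - rewrite sumR_0. unfold ah. simpl. unfold Rdiv. rewrite Rinv_1.
    destruct (Nat.eqb_spec (m * n) 1), (Nat.eqb_spec m 1), (Nat.eqb_spec n 1); try (exfalso; nia); lra.
  - assert (HS : 0 < INR (S j)) by (apply lt_0_INR; lia).
    apply (Rmult_eq_reg_l (INR (S j))); [|lra].
    rewrite ah_S. rewrite split_sum by auto.
    rewrite (sumR_ext (fun d => if Nat.leb 1 d && Nat.eqb (m mod d) 0 then cF X d * ah X j (m / d * n) else 0)
       (fun d => sumR (fun i => (if Nat.leb 1 d && Nat.eqb (m mod d) 0 then cF X d * ah X i (m / d) else 0) * ah X (j - i) n) j)).
    2:{ intros d Hd. destruct (Nat.leb 1 d && Nat.eqb (m mod d) 0) eqn:E.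
        - apply andb_prop in E as [E1 E2]. apply Nat.leb_le in E1. apply dvb_iff in E2; auto.
          rewrite IHj. rewrite <- sumR_mult_l. apply sumR_ext; intros; ring.
          + destruct E2 as [c ->]. rewrite Nat.div_mul by lia. nia.
          + auto.
          + apply (gcd_div_l m n); auto. destruct E2 as [c ->]. rewrite Nat.div_mul by lia. exists d; lia.
        - symmetry. apply sumR_zero. intros; ring. }
    rewrite (sumR_ext (fun d => if Nat.leb 1 d && Nat.eqb (n mod d) 0 then cF X d * ah X j (m * (n / d)) else 0)
       (fun d => sumR (fun i => ah X i m * (if Nat.leb 1 d && Nat.eqb (n mod d) 0 then cF X d * ah X (j - i) (n / d) else 0)) j)).
    2:{ intros d Hd. destruct (Nat.leb 1 d && Nat.eqb (n mod d) 0) eqn:E.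
        - apply andb_prop in E as [E1 E2]. apply Nat.leb_le in E1. apply dvb_iff in E2; auto.
          rewrite IHj. rewrite <- sumR_mult_l. apply sumR_ext; intros; ring.
          + auto.
          + destruct E2 as [c ->]. rewrite Nat.div_mul by lia. nia.
          + apply (gcd_div_r m n); auto. destruct E2 as [c ->]. rewrite Nat.div_mul by lia. exists d; lia.
        - symmetry. apply sumR_zero. intros; ring. }
    rewrite (sumR_switch _ m j), (sumR_switch _ n j).
    rewrite (sumR_ext (fun j0 => sumR (fun i => (if Nat.leb 1 i && Nat.eqb (m mod i) 0 then cF X i * ah X j0 (m / i) else 0) * ah X (j - j0) n) m)
       (fun i => INR (S i) * (ah X (S i) m * ah X (S j - S i) n))).
    2:{ intros i Hi. rewrite sumR_mult_r. rewrite <- ah_S. replace (S j - S i)%nat with (j - i)%nat by lia. ring. }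
    rewrite (sumR_ext (fun j0 => sumR (fun i => ah X j0 m * (if Nat.leb 1 i && Nat.eqb (n mod i) 0 then cF X i * ah X (j - j0) (n / i) else 0)) n)
       (fun i => INR (S j - i) * (ah X i m * ah X (S j - i) n))).
    2:{ intros i Hi. rewrite sumR_mult_l. rewrite <- ah_S. replace (S j - i)%nat with (S (j - i))%nat by lia. ring. }
    rewrite <- sumR_mult_l.
    rewrite (sumR_ext (fun i => INR (S j) * (ah X i m * ah X (S j - i) n))
       (fun i => INR i * (ah X i m * ah X (S j - i) n) + INR (S j - i) * (ah X i m * ah X (S j - i) n))).
    2:{ intros i Hi. rewrite <- Rmult_plus_distr_r, <- plus_INR. f_equal. f_equal. lia. }
    rewrite sumR_plus. rewrite sumR_shift. rewrite (sumR_S (fun i => INR (S j - i) * _)).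
    replace (S j - S j)%nat with 0%nat by lia. simpl (INR 0). ring.
Qed.

Definition beta X k n := sumR (fun j => k ^ j * ah X j n) n.

Lemma beta_1 X k : beta X k 1 = 1.
Proof.
  unfold beta. rewrite sumR_S, sumR_0. rewrite (ah_vanish X 1 1) by lia.
  unfold ah. simpl. field.
Qed.

Lemma beta_ext X k n N : (1 <= n)%nat -> (n <= N + 1)%nat -> beta X k n = sumR (fun j => k ^ j * ah X j n) N.
Proof.
  intros. unfold beta. apply (sumR_supp _ _ _ (n - 1)); try lia.
  intros i Hi. rewrite ah_vanish by lia. ring.
Qed.

Lemma beta_mult X k m n : (1 <= m)%nat -> (1 <= n)%nat -> Nat.gcd m n = 1%nat ->
  beta X k (m * n) = beta X k m * beta X k n.
Proof.
  intros Hm Hn Hg. unfold beta at 1.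
  rewrite (sumR_ext _ (fun j => sumR (fun i => (k ^ i * ah X i m) * (k ^ (j - i) * ah X (j - i) n)) j)).
  2:{ intros j Hj. rewrite ah_split by auto. rewrite <- sumR_mult_l. apply sumR_ext. intros i Hi.
      replace j with (i + (j - i))%nat at 1 by lia. rewrite pow_add. ring. }
  rewrite (sumR_triangle (fun i l => (k ^ i * ah X i m) * (k ^ l * ah X l n))).
  rewrite (sumR_ext _ (fun i => (k ^ i * ah X i m) * beta X k n)).
  2:{ intros i Hi. rewrite sumR_mult_l. destruct (le_lt_dec m i).
      - rewrite ah_vanish by lia. ring.
      - rewrite (beta_ext X k n (m * n - i)) by nia. reflexivity. }
  rewrite sumR_mult_r. rewrite (beta_ext X k m (m * n)) by nia. reflexivity.
Qed.

Fixpoint G (w : nat -> R) (j a : nat) : R :=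
  match j with
  | O => if Nat.eqb a 0 then 1 else 0
  | S j' => sumR (fun m => if Nat.leb 1 m then w m * G w j' (a - m) else 0) a
  end.

Lemma G_nonneg w j a : (forall m, (1 <= m)%nat -> 0 <= w m) -> 0 <= G w j a.
Proof.
  intros Hw. revert a; induction j; intros a; cbn [G].
  - destruct Nat.eqb; lra.
  - apply sumR_nonneg. intros m _. destruct (Nat.leb_spec 1 m); simpl; [|lra]. apply Rmult_le_pos; auto.
Qed.

Lemma G_le w w' j a : (forall m, (1 <= m)%nat -> 0 <= w m <= w' m) -> G w j a <= G w' j a.
Proof.
  intros Hw. revert a; induction j; intros a; cbn [G].
  - lra.
  - apply sumR_le. intros m _. destruct (Nat.leb_spec 1 m); simpl; [|lra].
    apply Rmult_le_compat; try apply Hw; auto. apply G_nonneg. intros; apply Hw; auto.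
Qed.

Lemma G_ext w w' a0 : (forall m, (1 <= m <= a0)%nat -> w m = w' m) ->
  forall j a, (a <= a0)%nat -> G w j a = G w' j a.
Proof.
  intros Hw j. induction j; intros a Ha; cbn [G]; auto.
  apply sumR_ext. intros m Hm. destruct (Nat.leb_spec 1 m); auto. rewrite Hw, IHj by lia. reflexivity.
Qed.

Lemma G_vanish w j a : (a < j)%nat -> G w j a = 0.
Proof.
  revert a; induction j; intros a Ha; cbn [G]. lia.
  apply sumR_zero. intros m Hm. destruct (Nat.leb_spec 1 m); auto. rewrite IHj by lia. ring.
Qed.

Definition hw (m : nat) : R := / INR m.

Lemma sumR_restrict f N M : (N <= M)%nat -> sumR f N = sumR (fun i => if Nat.leb i N then f i else 0) M.
Proof.
  intros. rewrite (sumR_extend _ N M); auto.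
  - apply sumR_ext. intros i Hi. destruct (Nat.leb_spec i N); auto; lia.
  - intros i Hi. destruct (Nat.leb_spec i N); auto; lia.
Qed.

Lemma G_deriv j : forall a, INR a * G hw (S j) a =
  INR (S j) * sumR (fun m => if Nat.leb 1 m then G hw j (a - m) else 0) a.
Proof.
  induction j; intros a.
  - cbn [G]. destruct a.
    + rewrite !sumR_0. simpl. ring.
    + rewrite (sumR_single _ _ (S a)), (sumR_single (fun m => if Nat.leb 1 m then _ else 0) _ (S a)); try lia.
      * simpl (Nat.leb 1 (S a)). rewrite Nat.sub_diag. simpl (Nat.eqb 0 0). unfold hw.
        assert (0 < INR (S a)) by (apply lt_0_INR; lia). simpl (INR 1). field. lra.
      * intros i Hi Hne. destruct (Nat.leb_spec 1 i), (Nat.eqb_spec (S a - i) 0); simpl; try lia; ring.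
      * intros i Hi Hne. destruct (Nat.leb_spec 1 i), (Nat.eqb_spec (S a - i) 0); simpl; try lia; ring.
  - change (G hw (S (S j)) a) with (sumR (fun m => if Nat.leb 1 m then hw m * G hw (S j) (a - m) else 0) a).
    rewrite <- sumR_mult_l.
    rewrite (sumR_ext _ (fun m => (if Nat.leb 1 m then G hw (S j) (a - m) else 0) +
        (if Nat.leb 1 m then hw m * (INR (S j) * sumR (fun m' => if Nat.leb 1 m' then G hw j (a - m - m') else 0) (a - m)) else 0))).
    2:{ intros m Hm. destruct (Nat.leb_spec 1 m); [|ring]. rewrite <- IHj.
        replace (INR a) with (INR m + INR (a - m)) by (rewrite <- plus_INR; f_equal; lia).
        unfold hw. assert (0 < INR m) by (apply lt_0_INR; lia). field. lra. }
    rewrite sumR_plus.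
    assert (E : sumR (fun m => if Nat.leb 1 m then hw m * (INR (S j) * sumR (fun m' => if Nat.leb 1 m' then G hw j (a - m - m') else 0) (a - m)) else 0) a
       = INR (S j) * sumR (fun m => if Nat.leb 1 m then G hw (S j) (a - m) else 0) a).
    { rewrite <- sumR_mult_l.
      transitivity (sumR (fun m => sumR (fun m' => INR (S j) * (if Nat.leb 1 m && Nat.leb 1 m' && Nat.leb (m + m') a then hw m * G hw j (a - m - m') else 0)) a) a).
      - apply sumR_ext. intros m Hm. destruct (Nat.leb_spec 1 m); cbn [andb].
        + rewrite (sumR_restrict _ (a - m) a) by lia. rewrite <- !sumR_mult_l. apply sumR_ext.
          intros m' Hm'. destruct (Nat.leb_spec m' (a - m)), (Nat.leb_spec 1 m'), (Nat.leb_spec (m + m') a); simpl; try lia; ring.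
        + symmetry. apply sumR_zero. intros; ring.
      - rewrite sumR_switch. apply sumR_ext. intros m' Hm'.
        destruct (Nat.leb_spec 1 m'); cbn [andb].
        + cbn [G]. rewrite (sumR_restrict _ (a - m') a) by lia. rewrite <- !sumR_mult_l. apply sumR_ext.
          intros m Hm. destruct (Nat.leb_spec m (a - m')), (Nat.leb_spec 1 m'), (Nat.leb_spec 1 m), (Nat.leb_spec (m + m') a); simpl; try lia; try ring.
          replace (a - m' - m)%nat with (a - m - m')%nat by lia. ring.
        + rewrite Rmult_0_r. apply sumR_zero. intros m Hm. destruct (Nat.leb 1 m); simpl; ring. }
    rewrite E. rewrite (S_INR (S j)). ring.
Qed.

Definition gG j a := G hw j a / INR (fact j).

Lemma gG_deriv j a : INR a * gG (S j) a = sumR (fun m => if Nat.leb 1 m then gG j (a - m) else 0) a.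
Proof.
  unfold gG. assert (H := G_deriv j a). rewrite fact_simpl, mult_INR.
  pose proof (INR_fact_pos j). assert (0 < INR (S j)) by (apply lt_0_INR; lia).
  transitivity (INR a * G hw (S j) a / INR (S j) / INR (fact j)). field; lra.
  rewrite H.
  rewrite (sumR_ext (fun m => if Nat.leb 1 m then G hw j (a - m) / INR (fact j) else 0) (fun i => (if Nat.leb 1 i then G hw j (a - i) else 0) * / INR (fact j))).
  rewrite sumR_mult_r. field; lra. intros; destruct Nat.leb; unfold Rdiv; ring.
Qed.

Definition BB k N a := sumR (fun j => k ^ j * gG j a) N.

Lemma BB_stable k N a : (a <= N)%nat -> BB k (S N) a = BB k N a.
Proof. intros. unfold BB. rewrite sumR_S. unfold gG. rewrite G_vanish by lia. unfold Rdiv. ring. Qed.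

Lemma BB_rec k N a : (a <= N)%nat -> INR a * BB k N a = k * sumR (fun m => if Nat.leb 1 m then BB k N (a - m) else 0) a.
Proof.
  intros Ha. rewrite <- BB_stable by auto. unfold BB. rewrite sumR_shift.
  unfold gG at 1. simpl G. simpl (fact 0).
  rewrite Rmult_plus_distr_l. destruct (Nat.eqb_spec a 0).
  - subst. rewrite !sumR_0. simpl. ring.
  - rewrite <- sumR_mult_l.
    rewrite (sumR_ext _ (fun j => k * (k ^ j * sumR (fun m => if Nat.leb 1 m then gG j (a - m) else 0) a))).
    2:{ intros. rewrite <- gG_deriv. simpl. ring. }
    rewrite sumR_mult_l. replace (INR a * (k ^ 0 * (0 / INR 1))) with 0 by (unfold Rdiv; ring). rewrite Rplus_0_l. f_equal.
    rewrite (sumR_ext (fun j => _ * sumR _ a) (fun j => sumR (fun m => if Nat.leb 1 m then k ^ j * gG j (a - m) else 0) a)).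
    2:{ intros. rewrite <- sumR_mult_l. apply sumR_ext. intros. destruct Nat.leb; ring. }
    rewrite sumR_switch. apply sumR_ext. intros m Hm. destruct Nat.leb; [reflexivity|]. apply sumR_zero; auto.
Qed.

Definition rr k a := rising k a / INR (fact a).

Lemma rr_rec k a : INR a * rr k a = k * sumR (fun m => if Nat.leb 1 m then rr k (a - m) else 0) a.
Proof.
  induction a.
  - rewrite sumR_0. simpl. ring.
  - rewrite sumR_shift. simpl (Nat.leb 1 0).
    rewrite (sumR_ext (fun i => if Nat.leb 1 (S i) then rr k (S a - S i) else 0) (fun i => rr k (a - i))).
    2:{ intros. simpl. reflexivity. }
    assert (E : sumR (fun i => rr k (a - i)) a = rr k a + sumR (fun m => if Nat.leb 1 m then rr k (a - m) else 0) a).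
    { rewrite <- (sumR_const_ind a 0 (rr k a)) by lia. rewrite <- sumR_plus. apply sumR_ext. intros i Hi.
      destruct Nat.eq_dec, (Nat.leb_spec 1 i); subst; simpl; try lia. rewrite Nat.sub_0_r; ring. ring. }
    rewrite Rplus_0_l.
    rewrite E, Rmult_plus_distr_l, <- IHa. unfold rr. simpl rising. rewrite fact_simpl, mult_INR, S_INR.
    pose proof (INR_fact_pos a). pose proof (pos_INR a). field. split; lra.
Qed.

Lemma BB_rr k N a : (a <= N)%nat -> BB k N a = rr k a.
Proof.
  induction a as [a IH] using (well_founded_induction lt_wf). intros Ha.
  destruct (Nat.eq_dec a 0).
  - subst. unfold BB. destruct N.
    + rewrite sumR_0. unfold gG, rr. simpl. field.
    + rewrite sumR_shift. rewrite sumR_zero.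
      * unfold gG, rr. simpl. field.
      * intros i Hi. unfold gG. rewrite G_vanish by lia. unfold Rdiv; ring.
  - apply (Rmult_eq_reg_l (INR a)); [|apply not_0_INR; auto].
    rewrite BB_rec, rr_rec by auto. f_equal. apply sumR_ext. intros m Hm.
    destruct (Nat.leb_spec 1 m); auto. apply IH; lia.
Qed.

Lemma rr_nonneg k a : 0 <= k -> 0 <= rr k a.
Proof.
  intros Hk. unfold rr. apply Rmult_le_pos; [|left; apply Rinv_0_lt_compat, INR_fact_pos].
  induction a; simpl. lra. apply Rmult_le_pos; auto. pose proof (pos_INR a). lra.
Qed.

Lemma aF_pp X p j : isp p -> forall a, aF X j (p ^ a) = G (fun m => cF X (p ^ m)) j a.
Proof.
  intros Hp. pose proof (isp_ge2 _ Hp). induction j; intros a.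
  - cbn [aF G]. destruct (Nat.eqb_spec (p ^ a) 1), (Nat.eqb_spec a 0); subst; simpl in *; try lia; auto.
    pose proof (lt_pow2 p a H). assert (p ^ 1 <= p ^ a)%nat by (apply Nat.pow_le_mono_r; lia). simpl in *. lia.
  - rewrite aF_S. cbn [G].
    rewrite (sumR_reindex _ (fun m => p ^ m)%nat (p ^ a) a).
    + apply sumR_ext. intros m Hm.
      assert (Hd : Nat.divide (p ^ m) (p ^ a)) by (exists (p ^ (a - m))%nat; rewrite <- Nat.pow_add_r; f_equal; lia).
      rewrite dvb_true by (auto; apply pow_pos_nat; lia).
      replace (Nat.leb 1 (p ^ m)) with true by (symmetry; apply Nat.leb_le, pow_pos_nat; lia).
      destruct (Nat.leb_spec 1 m); cbn [andb].
      * rewrite <- IHj. f_equal. f_equal.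
        replace (p ^ a)%nat with (p ^ (a - m) * p ^ m)%nat by (rewrite <- Nat.pow_add_r; f_equal; lia).
        rewrite Nat.div_mul; auto. pose proof (pow_pos_nat p m). lia.
      * replace m with 0%nat by lia. simpl. rewrite cF_1. ring.
    + intros. apply Nat.pow_le_mono_r; lia.
    + intros m1 m2 _ _ E. apply Nat.pow_inj_r in E; lia.
    + intros d Hd Hnz. destruct (Nat.leb 1 d && Nat.eqb (p ^ a mod d) 0) eqn:E; [|lra].
      apply andb_prop in E as [E1 E2]. apply Nat.leb_le in E1. apply dvb_iff in E2; auto.
      assert (Hc : cF X d <> 0) by (intro Hc; rewrite Hc in Hnz; lra).
      destruct (cF_cases X d Hc) as [q [e [Hq [He [-> _]]]]].
      assert (q = p). { eapply isp_div_pow; eauto. eapply Nat.divide_trans; [|apply E2].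
        exists (q ^ (e - 1))%nat. replace e with (e - 1 + 1)%nat at 1 by lia. rewrite Nat.pow_add_r. simpl. lia. }
      subst q. exists e. split; auto.
      replace (p ^ a)%nat with (p ^ a * 1)%nat in E2 by lia. apply pow_div_iff in E2; auto.
      intros Hd1. apply Nat.divide_1_r in Hd1. lia.
Qed.

Lemma cF_pp_bound X p m : isp p -> (1 <= m)%nat -> 0 <= cF X (p ^ m) <= hw m.
Proof.
  intros. rewrite cF_pp; auto. unfold hw. assert (0 < / INR m) by (apply Rinv_0_lt_compat, lt_0_INR; lia).
  destruct Rle_dec; lra.
Qed.

Lemma beta_pp X k p a : isp p -> beta X k (p ^ a) = sumR (fun j => k ^ j * (G (fun m => cF X (p ^ m)) j a / INR (fact j))) (p ^ a).
Proof. intros. unfold beta, ah. apply sumR_ext. intros. rewrite aF_pp; auto. Qed.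

Lemma beta_pp_val X k p a : isp p -> INR (p ^ a) <= X -> beta X k (p ^ a) = rr k a.
Proof.
  intros Hp HX. pose proof (isp_ge2 _ Hp). rewrite beta_pp; auto.
  rewrite <- (BB_rr k (p ^ a) a) by (pose proof (lt_pow2 p a H); lia).
  unfold BB, gG. apply sumR_ext. intros j _. f_equal. f_equal.
  apply (G_ext _ _ a); auto. intros m Hm. rewrite cF_pp by (auto; lia). destruct Rle_dec; auto.
  exfalso. apply n. eapply Rle_trans; [|apply HX]. apply le_INR. apply Nat.pow_le_mono_r; lia.
Qed.

Lemma beta_pp_bound X k p a : isp p -> Rabs (beta X k (p ^ a)) <= rr (Rabs k) a.
Proof.
  intros Hp. pose proof (isp_ge2 _ Hp). rewrite beta_pp; auto.
  rewrite <- (BB_rr (Rabs k) (p ^ a) a) by (pose proof (lt_pow2 p a H); lia).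
  eapply Rle_trans. apply sumR_abs. unfold BB, gG. apply sumR_le. intros j _.
  pose proof (INR_fact_pos j).
  rewrite Rabs_mult, <- RPow_abs. apply Rmult_le_compat_l. apply pow_le, Rabs_pos.
  rewrite Rabs_right. 2:{ apply Rle_ge. apply Rmult_le_pos. apply G_nonneg. intros; apply cF_pp_bound; auto.
    left; apply Rinv_0_lt_compat; auto. }
  unfold Rdiv. apply Rmult_le_compat_r. left; apply Rinv_0_lt_compat; auto.
  apply G_le. intros; apply cF_pp_bound; auto.
Qed.

Lemma dk_ext k n N : (1 <= n)%nat -> (n <= N)%nat ->
  dk k n = prodR (fun p => if primeb p then rr k (vp p n) else 1) N.
Proof.
  intros. unfold dk. symmetry. apply prodR_extend; auto. intros p Hp.
  destruct (primeb p) eqn:E; auto. apply primeb_isp in E. rewrite vp_big by (auto; lia).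
  unfold rr. simpl. field.
Qed.

Lemma rr_0 k : rr k 0 = 1.
Proof. unfold rr. simpl. field. Qed.

Lemma dk_1 k : dk k 1 = 1.
Proof. unfold dk. rewrite prodR_S, prodR_0.
  replace (primeb 0) with false by (symmetry; apply primeb_nisp; intros H; apply isp_ge2 in H; lia).
  replace (primeb 1) with false by (symmetry; apply primeb_nisp; intros H; apply isp_ge2 in H; lia). ring. Qed.

Lemma dk_pp k p a : isp p -> dk k (p ^ a) = rr k a.
Proof.
  intros Hp. pose proof (isp_ge2 _ Hp). destruct a.
  - simpl. rewrite dk_1, rr_0. reflexivity.
  - unfold dk. rewrite (prodR_single _ _ p).
    + replace (primeb p) with true by (symmetry; apply primeb_isp; auto). rewrite vp_pow; auto.
    + apply pow_ge_base; lia.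
    + intros q _ Hq. destruct (primeb q) eqn:E; auto. apply primeb_isp in E.
      rewrite vp_ndiv; auto. unfold rr; simpl; field.
      intros Hd. apply Hq. eapply isp_div_pow; eauto. apply pow_pos_nat; lia.
Qed.

Lemma dk_mult k m n : (1 <= m)%nat -> (1 <= n)%nat -> Nat.gcd m n = 1%nat -> dk k (m * n) = dk k m * dk k n.
Proof.
  intros Hm Hn Hg. rewrite (dk_ext k (m * n) (m * n)), (dk_ext k m (m * n)), (dk_ext k n (m * n)); try nia.
  rewrite <- prodR_mult. apply prodR_ext. intros p _. destruct (primeb p) eqn:E; [|ring].
  apply primeb_isp in E. rewrite vp_mul; auto.
  destruct (classic (Nat.divide p m)) as [Hpm|Hpm].
  - assert (~ Nat.divide p n). { intros Hpn. assert (Nat.divide p 1) by (rewrite <- Hg; apply Nat.gcd_greatest; auto).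
      apply Nat.divide_1_r in H. apply isp_ge2 in E. lia. }
    rewrite (vp_ndiv p n), Nat.add_0_r, rr_0; auto. ring.
  - rewrite (vp_ndiv p m), rr_0; auto. simpl. ring.
Qed.

Lemma dk_nonneg k n : 0 <= k -> 0 <= dk k n.
Proof. intros. unfold dk. apply prodR_nonneg. intros. destruct primeb; [|lra]. apply (rr_nonneg k); auto. Qed.

Lemma mult_ind (Q : nat -> Prop) : Q 1%nat ->
  (forall p a m, isp p -> (1 <= a)%nat -> ~ Nat.divide p m -> (1 <= m)%nat -> Q m -> Q (p ^ a * m)%nat) ->
  forall n, (1 <= n)%nat -> Q n.
Proof.
  intros H1 HS n. induction n as [n IH] using (well_founded_induction lt_wf). intros Hn.
  destruct (Nat.eq_dec n 1). subst; auto.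
  destruct (prime_divisor_exists n) as [p [Hp Hpn]]; [lia|].
  destruct (decomp p n Hp Hn) as [v [m [Hnm [Hpm Hm]]]].
  assert (Hv : (1 <= v)%nat). { destruct v; [|lia]. simpl in Hnm. rewrite Nat.add_0_r in Hnm. subst. tauto. }
  pose proof (isp_ge2 _ Hp). pose proof (pow_ge_base p v ltac:(lia) Hv).
  rewrite Hnm. apply HS; auto. apply IH; auto. nia.
Qed.

Lemma beta_dk X k n : (1 <= n)%nat ->
  (forall p m : nat, prime (Z.of_nat p) -> (1 <= m)%nat -> Nat.divide (p ^ m) n -> INR (p ^ m) <= X) ->
  beta X k n = dk k n.
Proof.
  intros Hn. revert n Hn. apply (mult_ind (fun n => _ -> beta X k n = dk k n)).
  - intros. rewrite beta_1, dk_1. reflexivity.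
  - intros p a m Hp Ha Hpm Hm IH Hc.
    rewrite beta_mult, dk_mult; try (apply pow_pos_nat; apply isp_ge2 in Hp; lia); auto; try (apply coprime_pow; auto).
    rewrite IH, beta_pp_val, dk_pp; auto.
    + apply Hc; auto. exists m. lia.
    + intros q e Hq He Hd. apply Hc; auto. eapply Nat.divide_trans; [apply Hd|]. exists (p ^ a)%nat. lia.
Qed.

Lemma beta_bound X k n : (1 <= n)%nat -> Rabs (beta X k n) <= dk (Rabs k) n.
Proof.
  revert n. apply mult_ind.
  - rewrite beta_1, dk_1, Rabs_R1. lra.
  - intros p a m Hp Ha Hpm Hm IH.
    rewrite beta_mult, dk_mult; try (apply pow_pos_nat; apply isp_ge2 in Hp; lia); auto; try (apply coprime_pow; auto).
    rewrite Rabs_mult, dk_pp; auto. apply Rmult_le_compat; try apply Rabs_pos; auto. apply beta_pp_bound; auto.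
Qed.

Lemma beta_mult_def X k : multiplicative (beta X k).
Proof. split. apply beta_1. intros. apply beta_mult; auto. Qed.

Lemma up_bound W x : INR x <= W -> (x < Z.to_nat (up W))%nat.
Proof.
  intros H. destruct (archimed W) as [H1 _]. rewrite INR_IZR_INZ in H.
  assert (Z.of_nat x < up W)%Z by (apply lt_IZR; lra). lia.
Qed.

Lemma alpha_term X T k j n : (if Rle_dec (INR j) (W0 k T) then k ^ j / INR (fact j) * aF X j n else 0) =
  if Rle_dec (INR j) (W0 k T) then k ^ j * ah X j n else 0.
Proof. destruct Rle_dec; auto. unfold ah, Rdiv. ring. Qed.

Lemma alpha_supp X T k n : 1 <= X -> alpha X T k n <> 0 -> INR n <= Rpower X (W0 k T).
Proof.
  intros HX H. apply sumR_nz in H. destruct H as [j [_ H]].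
  destruct Rle_dec as [Hj|]; [|lra].
  assert (aF X j n <> 0) by (intro E; rewrite E in H; lra).
  apply aF_supp in H0. destruct H0 as [_ [_ [H0 _]]].
  eapply Rle_trans; [apply H0|]. rewrite <- Rpower_pow by lra. apply Rle_Rpower; auto.
Qed.

Lemma sumR_le_ext g N M : (N <= M)%nat -> (forall i, 0 <= g i) -> sumR g N <= sumR g M.
Proof.
  intros H Hg. induction M.
  - replace N with 0%nat by lia. lra.
  - destruct (Nat.eq_dec N (S M)). subst; lra. rewrite sumR_S. specialize (Hg (S M)). assert (sumR g N <= sumR g M) by (apply IHM; lia). lra.
Qed.

Lemma alpha_bound X T k n : (1 <= n)%nat -> Rabs (alpha X T k n) <= dk (Rabs k) n.
Proof.
  intros Hn. unfold alpha. eapply Rle_trans. apply sumR_abs.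
  eapply Rle_trans. apply (sumR_le _ (fun j => Rabs k ^ j * ah X j n)).
  { intros j _. rewrite alpha_term. destruct Rle_dec.
    - rewrite Rabs_mult, <- RPow_abs, (Rabs_right (ah X j n)). lra. apply Rle_ge, ah_nonneg.
    - rewrite Rabs_R0. apply Rmult_le_pos. apply pow_le, Rabs_pos. apply ah_nonneg. }
  eapply Rle_trans. apply (sumR_le_ext _ _ (Nat.max (Z.to_nat (up (W0 k T))) n)). lia.
  intros; apply Rmult_le_pos. apply pow_le, Rabs_pos. apply ah_nonneg.
  assert (Hb := beta_bound X (Rabs k) n Hn). rewrite Rabs_Rabsolu in Hb. eapply Rle_trans; [|apply Hb]. right.
  rewrite (beta_ext X (Rabs k) n (Nat.max (Z.to_nat (up (W0 k T))) n)) by lia.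
  symmetry. apply Rabs_right. apply Rle_ge. apply sumR_nonneg. intros; apply Rmult_le_pos. apply pow_le, Rabs_pos. apply ah_nonneg.
Qed.

Lemma alpha_beta X T k n : (1 <= n)%nat -> INR (Omega n) <= W0 k T -> alpha X T k n = beta X k n.
Proof.
  intros Hn HO. unfold alpha, beta.
  pose proof (up_bound _ _ HO) as HU.
  rewrite (sumR_ext _ (fun j => k ^ j * ah X j n)).
  2:{ intros j Hj. rewrite alpha_term. destruct Rle_dec as [|Hr]; auto.
      destruct (Req_dec (ah X j n) 0) as [E|E]. rewrite E; ring.
      exfalso. apply Hr. assert (aF X j n <> 0) by (intro E'; apply E; unfold ah; rewrite E'; unfold Rdiv; ring).
      apply aF_supp in H. destruct H as [_ [_ [_ [H _]]]]. eapply Rle_trans; [|apply HO]. apply le_INR; auto. }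
  apply (sumR_supp _ _ _ (Nat.min (Omega n) (n - 1))); try lia.
  intros j Hj. destruct (Req_dec (ah X j n) 0) as [E|E]. rewrite E; ring.
  assert (aF X j n <> 0) by (intro E'; apply E; unfold ah; rewrite E'; unfold Rdiv; ring).
  destruct (le_lt_dec n j). exfalso. apply E. apply ah_vanish; auto.
  apply aF_supp in H. destruct H as [_ [_ [_ [H _]]]]. lia.
Qed.

Lemma Cexp_add a b : Cexp (Cplus a b) = Cmult (Cexp a) (Cexp b).
Proof.
  destruct a as [a1 a2], b as [b1 b2]. unfold Cexp, Cplus, Cmult. simpl.
  rewrite exp_plus, cos_plus, sin_plus. f_equal; ring.
Qed.

Lemma Cexp_0 : Cexp (RtoC 0) = RtoC 1.
Proof. unfold Cexp. simpl. rewrite exp_0, cos_0, sin_0. unfold RtoC. f_equal; ring. Qed.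

Lemma npow_mult d m s : (1 <= d)%nat -> (1 <= m)%nat -> npow_neg (d * m) s = Cmult (npow_neg d s) (npow_neg m s).
Proof.
  intros. unfold npow_neg. rewrite <- Cexp_add. f_equal.
  rewrite mult_INR, ln_mult by (apply lt_0_INR; lia). rewrite RtoC_plus. ring.
Qed.

Lemma npow_1 s : npow_neg 1 s = RtoC 1.
Proof. unfold npow_neg. simpl. rewrite ln_1. rewrite <- Cexp_0. f_equal. ring. Qed.

Lemma RtoC_sumR f N : RtoC (sumR f N) = sumC (fun i => RtoC (f i)) N.
Proof. induction N. rewrite sumR_0, sumC_0; auto. rewrite sumR_S, sumC_S, RtoC_plus, IHN; auto. Qed.

Definition DP (s : C) (f : nat -> R) N := sumC (fun n => Cmult (RtoC (f n)) (npow_neg n s)) N.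

Lemma DP_supp s f K N1 N2 : (K <= N1)%nat -> (K <= N2)%nat -> (forall n, (K < n)%nat -> f n = 0) -> DP s f N1 = DP s f N2.
Proof. intros. unfold DP. apply (sumC_supp _ _ _ K); auto. intros. rewrite H1 by auto. ring. Qed.

Lemma DP_mult s (c a : nat -> R) M1 M2 N : c 0%nat = 0 -> a 0%nat = 0 ->
  (forall d, (M1 < d)%nat -> c d = 0) -> (forall m, (M2 < m)%nat -> a m = 0) ->
  (M1 <= N)%nat -> (M1 * M2 <= N)%nat ->
  Cmult (DP s c M1) (DP s a M2) =
  DP s (fun n => sumR (fun d => if Nat.leb 1 d && Nat.eqb (n mod d) 0 then c d * a (n / d)%nat else 0) n) N.
Proof.
  intros c0 a0 Hc Ha H1 H2. unfold DP.
  rewrite <- sumC_mult_r.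
  rewrite (sumC_ext _ (fun d => sumC (fun m => Cmult (RtoC (c d * a m)) (npow_neg (d * m) s)) M2)).
  2:{ intros d Hd. rewrite <- sumC_mult_l. apply sumC_ext. intros m Hm.
      destruct (Nat.eq_dec d 0). subst. rewrite c0. rewrite Rmult_0_l. ring.
      destruct (Nat.eq_dec m 0). subst. rewrite a0. rewrite Rmult_0_r. ring.
      rewrite npow_mult by lia. rewrite RtoC_mult. ring. }
  rewrite (sumC_ext (fun n => Cmult (RtoC (sumR _ n)) (npow_neg n s))
     (fun n => sumC (fun d => Cmult (RtoC (if Nat.leb 1 d && Nat.eqb (n mod d) 0 then c d * a (n / d)%nat else 0)) (npow_neg n s)) N)).
  2:{ intros n Hn. rewrite RtoC_sumR, <- sumC_mult_r. symmetry. apply sumC_extend; auto.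
      intros d Hd. destruct (Nat.leb_spec 1 d); cbn [andb]; [|ring].
      destruct (Nat.eq_dec n 0). subst. rewrite Nat.Div0.div_0_l. rewrite a0, Rmult_0_r. destruct Nat.eqb; ring.
      rewrite dvb_false. ring. lia. intros Hdv. apply Nat.divide_pos_le in Hdv; lia. }
  rewrite (sumC_switch _ N N). symmetry. rewrite (sumC_extend (fun d => sumC _ N) M1 N); auto.
  2:{ intros d Hd. apply sumC_zero. intros n Hn. rewrite Hc by lia. destruct (_ && _); rewrite ?Rmult_0_l; ring. }
  apply sumC_ext. intros d Hd. destruct (Nat.eq_dec d 0) as [Hd0|Hd0].
  - subst. rewrite sumC_zero. symmetry; apply sumC_zero. intros; rewrite c0, Rmult_0_l; ring.
    intros; simpl. ring.
  - rewrite (sumC_reindex _ (fun m => d * m)%nat N M2).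
    + apply sumC_ext. intros m Hm. replace (Nat.leb 1 d) with true by (symmetry; apply Nat.leb_le; lia).
      rewrite dvb_true by (try lia; exists m; lia). cbn [andb].
      replace (d * m / d)%nat with m by (rewrite Nat.mul_comm, Nat.div_mul; lia). reflexivity.
    + intros. nia.
    + intros. nia.
    + intros n Hn Hnz. destruct (Nat.leb 1 d && Nat.eqb (n mod d) 0) eqn:E.
      * apply andb_prop in E as [E1 E2]. apply Nat.leb_le in E1. apply dvb_iff in E2; auto.
        destruct E2 as [q ->]. exists q. rewrite Nat.div_mul in Hnz by lia. split; [|lia].
        destruct (le_lt_dec q M2); auto. rewrite Ha in Hnz by lia. exfalso; apply Hnz. rewrite Rmult_0_r. ring.
      * exfalso. apply Hnz. ring.
Qed.

Lemma cF_big X d : (Z.to_nat (up X) < d)%nat -> cF X d = 0.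
Proof.
  intros H. apply cF_le. destruct (archimed X) as [H1 _].
  destruct (Rle_dec 0 X).
  - assert (IZR (up X) <= INR d). { rewrite INR_IZR_INZ. apply IZR_le. lia. } lra.
  - pose proof (pos_INR d). lra.
Qed.

Lemma F_DP X t : F X t = DP (half_it t) (cF X) (Z.to_nat (up X)).
Proof.
  unfold F, DP. apply sumC_ext. intros n _. unfold cF.
  destruct (Nat.leb 1 n); [destruct Rle_dec|]; auto; ring.
Qed.

Lemma pow_F X t j : forall N, (forall n, (N < n)%nat -> aF X j n = 0) -> pow_n (F X t) j = DP (half_it t) (aF X j) N.
Proof.
  induction j; intros N HN.
  - simpl pow_n. unfold DP. rewrite (sumC_supp _ _ 1 1%nat).
    + rewrite sumC_S, sumC_0. simpl. rewrite npow_1. change (@one C_Ring) with (RtoC 1). ring.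
    + destruct N; [|lia]. exfalso. specialize (HN 1%nat ltac:(lia)). simpl in HN. lra.
    + lia.
    + intros n Hn. simpl. destruct (Nat.eqb_spec n 1); [lia|]. ring.
  - simpl pow_n. change (mult (F X t) (pow_n (F X t) j)) with (Cmult (F X t) (pow_n (F X t) j)).
    set (M2 := Z.to_nat (up (X ^ j))).
    rewrite (IHj M2).
    2:{ intros n Hn. destruct (Req_dec (aF X j n) 0); auto. apply aF_supp in H.
        destruct H as [_ [_ [H _]]]. apply up_bound in H. lia. }
    rewrite F_DP. rewrite (DP_mult _ _ _ _ _ (Nat.max N (Z.to_nat (up X) * M2 + Z.to_nat (up X)))).
    + apply (DP_supp _ _ N); try lia. intros n Hn. rewrite <- aF_S. auto.
    + apply cF_0.
    + apply aF_0.
    + apply cF_big.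
    + intros n Hn. destruct (Req_dec (aF X j n) 0); auto. apply aF_supp in H.
      destruct H as [_ [_ [H _]]]. apply up_bound in H. lia.
    + lia.
    + lia.
Qed.

Lemma smoothb_true X n : smooth_prop X n -> smoothb X n = true.
Proof.
  intros H. unfold smoothb. apply forallb_forall. intros p Hp.
  destruct (primeb p && Nat.eqb (n mod p) 0) eqn:E; auto.
  apply andb_prop in E as [E1 E2]. apply primeb_isp in E1. pose proof (isp_ge2 _ E1).
  apply dvb_iff in E2; [|lia]. destruct Rle_dec as [|Hn]; [reflexivity|]. exfalso. apply Hn. apply H; auto.
Qed.

Lemma Dtk_eq X T k t : 1 <= X ->
  Dtk X T k t = sumC (fun n => if Nat.leb 1 n && smoothb X n
                       then Cmult (RtoC (alpha X T k n)) (npow_neg n (half_it t))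
                       else RtoC 0) (Z.to_nat (up (Rpower X (W0 k T)))).
Proof.
  intros HX. set (N := Z.to_nat (up (Rpower X (W0 k T)))). unfold Dtk.
  rewrite (sumC_ext _ (fun j => sumC (fun n => Cmult (RtoC (if Rle_dec (INR j) (W0 k T) then k ^ j / INR (fact j) * aF X j n else 0)) (npow_neg n (half_it t))) N)).
  2:{ intros j Hj. destruct Rle_dec as [Hr|Hr].
      - rewrite (pow_F X t j N). unfold DP. rewrite <- sumC_mult_l. apply sumC_ext. intros n _.
        rewrite RtoC_mult. ring.
        intros n Hn. destruct (Req_dec (aF X j n) 0); auto. apply aF_supp in H.
        destruct H as [_ [_ [H _]]]. exfalso.
        assert (INR n <= Rpower X (W0 k T)). { eapply Rle_trans; [apply H|]. rewrite <- Rpower_pow by lra. apply Rle_Rpower; auto. }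
        apply up_bound in H0. unfold N in Hn. lia.
      - symmetry. apply sumC_zero. intros. ring. }
  rewrite sumC_switch. apply sumC_ext. intros n Hn.
  rewrite sumC_mult_r, <- RtoC_sumR. fold (alpha X T k n).
  destruct (Req_dec (alpha X T k n) 0) as [E|E].
  - rewrite E. destruct (_ && _); ring.
  - assert (Hs : exists j, aF X j n <> 0).
    { apply sumR_nz in E. destruct E as [j [_ Ej]]. exists j. destruct Rle_dec; [|lra]. intro E'. rewrite E' in Ej. lra. }
    destruct Hs as [j Hj]. apply aF_supp in Hj. destruct Hj as [H1 [_ [_ [_ H5]]]].
    replace (Nat.leb 1 n) with true by (symmetry; apply Nat.leb_le; auto).
    rewrite smoothb_true; auto.
Qed.

Lemma exp_le_inc x y : x <= y -> exp x <= exp y.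
Proof. intros [H|H]. left; apply exp_increasing; auto. subst; lra. Qed.

Definition gf (a b : R) (w : C) (u : R) : R :=
  fst w * (exp (u * a) * cos (u * b)) - snd w * (exp (u * a) * sin (u * b)).

Lemma gf_derive a b w u : is_derive (gf a b w) u (gf a b (Cmult w (a, b)) u).
Proof. unfold gf. destruct w as [w1 w2]. simpl. auto_derive; auto. ring. Qed.

Lemma gf_Derive_n a b w m u : Derive_n (gf a b w) m u = gf a b (Cmult w (pow_n (K:=C_Ring) (a, b) m)) u.
Proof.
  revert u. induction m; intros u.
  - simpl. unfold gf. destruct w as [w1 w2]. simpl. change (@one C_Ring) with (RtoC 1).
    unfold RtoC. simpl. ring_simplify. reflexivity.
  - simpl. rewrite (Derive_ext _ (gf a b (Cmult w (pow_n (K:=C_Ring) (a, b) m)))) by auto.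
    rewrite (is_derive_unique _ _ _ (gf_derive a b _ u)). f_equal.
    change (@mult C_Ring (a, b) (pow_n (K:=C_Ring) (a, b) m)) with (Cmult (a, b) (pow_n (K:=C_Ring) (a, b) m)). ring.
Qed.

Lemma gf_ex_derive_n a b w m u : ex_derive_n (gf a b w) m u.
Proof.
  destruct m; simpl; auto.
  apply (ex_derive_ext (gf a b (Cmult w (pow_n (K:=C_Ring) (a, b) m)))).
  intros; symmetry; apply gf_Derive_n.
  eexists. apply gf_derive.
Qed.

Lemma gf_Re a b w u : gf a b w u = Re (Cmult w (Cexp (Cmult (RtoC u) (a, b)))).
Proof.
  unfold gf, Cexp, Cmult, RtoC. destruct w as [w1 w2]. simpl.
  replace (u * a - 0 * b) with (u * a) by ring. replace (u * b + 0 * a) with (u * b) by ring. ring.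
Qed.

Lemma Cmod_Cexp y : Cmod (Cexp y) = exp (Re y).
Proof.
  unfold Cexp, Cmod. simpl. pose proof (exp_pos (Re y)).
  replace (exp (Re y) * cos (Im y) * (exp (Re y) * cos (Im y) * 1) +
     exp (Re y) * sin (Im y) * (exp (Re y) * sin (Im y) * 1)) with (exp (Re y) ^ 2)
    by (pose proof (sin2_cos2 (Im y)) as H2; unfold Rsqr in H2;
        transitivity (exp (Re y) ^ 2 * (sin (Im y) * sin (Im y) + cos (Im y) * cos (Im y))); [rewrite H2; ring|ring]).
  rewrite sqrt_pow2; lra.
Qed.

Definition TnC (z : C) n := sumC (fun j => Cmult (RtoC (/ INR (fact j))) (pow_n z j)) n.

Lemma taylor_re w z n : Rabs (Re (Cmult w (Cexp z)) - Re (Cmult w (TnC z n))) <=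
  Cmod w * (Cmod z ^ S n / INR (fact (S n)) * exp (Cmod z)).
Proof.
  destruct z as [a b].
  destruct (Taylor_Lagrange (gf a b w) n 0 1) as [zeta [Hz Heq]]; [lra| intros; apply gf_ex_derive_n |].
  replace (Re (Cmult w (Cexp (a, b)))) with (gf a b w 1).
  2:{ rewrite gf_Re. f_equal. f_equal. f_equal. unfold RtoC, Cmult. simpl. f_equal; ring. }
  replace (Re (Cmult w (TnC (a, b) n))) with
     (sum_f_R0 (fun m => (1 - 0) ^ m / INR (fact m) * Derive_n (gf a b w) m 0) n).
  2:{ unfold TnC. rewrite <- sumC_mult_l. rewrite sumC_Re. rewrite <- sum_n_Reals, <- sumR_sn.
      apply sumR_ext. intros m _. rewrite gf_Derive_n, gf_Re.
      replace (Cmult (RtoC 0) (a, b)) with (RtoC 0) by (unfold RtoC, Cmult; simpl; f_equal; ring).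
      rewrite Cexp_0. rewrite Rminus_0_r, pow1.
      destruct w as [w1 w2]. destruct (pow_n (K:=C_Ring) (a, b) m) as [p1 p2]. unfold Cmult, RtoC. simpl. field.
      apply not_0_INR, fact_neq_0. }
  rewrite Heq. replace (sum_f_R0 _ n + _ - _) with ((1 - 0) ^ S n / INR (fact (S n)) * Derive_n (gf a b w) (S n) zeta) by ring.
  rewrite gf_Derive_n, gf_Re. rewrite Rminus_0_r, pow1.
  pose proof (INR_fact_pos (S n)).
  rewrite Rabs_mult, Rabs_right by (apply Rle_ge; unfold Rdiv; rewrite Rmult_1_l; left; apply Rinv_0_lt_compat; auto).
  eapply Rle_trans. apply Rmult_le_compat_l. left; unfold Rdiv; rewrite Rmult_1_l; apply Rinv_0_lt_compat; auto.
  apply re_le_Cmod. rewrite !Cmod_mult, Cmod_Cexp.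
  replace (Cmod (pow_n (K:=C_Ring) (a, b) (S n))) with (Cmod (a, b) ^ S n).
  2:{ clear. induction (S n). simpl. change (@one C_Ring) with (RtoC 1). rewrite Cmod_1. auto.
      simpl. change (@mult C_Ring (a, b) (pow_n (K:=C_Ring) (a, b) n0)) with (Cmult (a, b) (pow_n (K:=C_Ring) (a, b) n0)). rewrite Cmod_mult, IHn0. auto. }
  assert (exp (Re (Cmult (RtoC zeta) (a, b))) <= exp (Cmod (a, b))).
  { apply exp_le_inc. unfold RtoC, Cmult. simpl. pose proof (re_le_Cmod (a, b)). simpl in H0.
    pose proof (Rabs_le_between' a (Cmod (a,b))). assert (zeta * a <= Rabs a).
    { destruct (Rle_dec 0 a). rewrite Rabs_right by lra. nra. rewrite Rabs_left by lra. nra. } lra. }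
  pose proof (Cmod_ge_0 w). pose proof (Cmod_ge_0 (a, b)). pose proof (pow_le (Cmod (a,b)) (S n) H2).
  pose proof (exp_pos (Re (Cmult (RtoC zeta) (a, b)))).
  unfold Rdiv. rewrite Rmult_1_l.
  assert (0 < / INR (fact (S n))) by (apply Rinv_0_lt_compat; auto).
  apply (Rmult_le_compat_l (Cmod w * Cmod (a, b) ^ S n * / INR (fact (S n)))) in H0; [|apply Rmult_le_pos; [apply Rmult_le_pos|]; lra].
  nra.
Qed.

Lemma exp_nat n x : exp (INR n * x) = exp x ^ n.
Proof. induction n. simpl. rewrite Rmult_0_l, exp_0. auto.
  rewrite S_INR, Rmult_plus_distr_r, Rmult_1_l, exp_plus, IHn. simpl. ring. Qed.

Lemma expU_le U : exp (INR U) <= 3 ^ U.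
Proof. replace (INR U) with (INR U * 1) by ring. rewrite exp_nat. apply pow_incr. split. left; apply exp_pos. apply exp_le_3. Qed.

Lemma fact_bound U : INR U ^ U / INR (fact U) <= 3 ^ U.
Proof.
  eapply Rle_trans; [|apply expU_le].
  eapply Rle_trans; [|apply (exp_ge_taylor (INR U) U (pos_INR U))].
  rewrite <- sum_n_Reals, <- sumR_sn. destruct U.
  - rewrite sumR_0. lra.
  - rewrite sumR_S. assert (0 <= sumR (fun k => INR (S U) ^ k / INR (fact k)) U).
    { apply sumR_nonneg. intros. apply Rmult_le_pos. apply pow_le, pos_INR. left; apply Rinv_0_lt_compat, INR_fact_pos. }
    lra.
Qed.

Lemma sqrt2_bound : sqrt 2 <= 1.4143.
Proof. pose proof (sqrt_sqrt 2 ltac:(lra)). pose proof (sqrt_pos 2). nra. Qed.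

Lemma exp015 : exp 0.15 <= / 0.85.
Proof.
  pose proof (exp_ineq1_le (-0.15)). pose proof (exp_pos 0.15).
  assert (exp 0.15 * exp (-0.15) = 1) by (rewrite <- exp_plus; replace (0.15 + -0.15) with 0 by lra; apply exp_0).
  apply (Rmult_le_reg_r 0.85); [lra|]. rewrite Rinv_l by lra. nra.
Qed.

Lemma num_main c U : 0 <= c -> (1 <= U)%nat -> 20 * c <= sqrt 2 * INR U ->
  c ^ U / INR (fact U) * exp (2 * c) <= (/ 4) ^ U.
Proof.
  intros Hc HU H. assert (HU' : 1 <= INR U) by (apply (le_INR 1); auto).
  set (x := 3 * c / INR U).
  assert (Hx0 : 0 <= x) by (unfold x; apply Rmult_le_pos; [lra| left; apply Rinv_0_lt_compat; lra]).
  assert (Hx : x <= 3 * 1.4143 / 20).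
  { unfold x. pose proof sqrt2_bound. apply (Rmult_le_reg_r (INR U)); [lra|]. unfold Rdiv. rewrite Rmult_assoc, Rinv_l by lra. nra. }
  assert (Hcx : c = x * INR U / 3) by (unfold x; field; lra).
  assert (E1 : c ^ U / INR (fact U) <= x ^ U).
  { rewrite Hcx. unfold Rdiv. rewrite !Rpow_mult_distr. pose proof (fact_bound U). pose proof (INR_fact_pos U).
    pose proof (pow_le x U Hx0). pose proof (pow_le (INR U) U (pos_INR U)).
    rewrite pow_inv. assert (0 < 3 ^ U) by (apply pow_lt; lra).
    unfold Rdiv in H0. apply (Rmult_le_compat_l (x ^ U * / 3 ^ U)) in H0; [|apply Rmult_le_pos; [lra|left; apply Rinv_0_lt_compat; lra]].
    replace (x ^ U * / 3 ^ U * 3 ^ U) with (x ^ U) in H0 by (field; lra). nra. }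
  assert (E2 : exp (2 * c) <= exp 0.15 ^ U).
  { rewrite <- exp_nat. apply exp_le_inc. pose proof sqrt2_bound. nra. }
  eapply Rle_trans. apply Rmult_le_compat; try (apply Rmult_le_pos; [apply pow_le; auto| left; apply Rinv_0_lt_compat, INR_fact_pos]); try (left; apply exp_pos); eauto.
  rewrite <- Rpow_mult_distr. apply pow_incr. pose proof exp015. pose proof (exp_pos 0.15). split. nra.
  apply (Rle_trans _ (3 * 1.4143 / 20 * / 0.85)). apply Rmult_le_compat; lra. lra.
Qed.

Lemma Cmod_mi : Cmod (0, -1) = 1.
Proof. unfold Cmod. simpl. replace (0 * (0 * 1) + -1 * (-1 * 1)) with 1 by ring. apply sqrt_1. Qed.

Lemma fst_sub (a b : C) : fst (Cplus a (Copp b)) = Re a - Re b.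
Proof. destruct a, b. unfold Cplus, Copp, Re. simpl. ring. Qed.
Lemma snd_sub (a b : C) : snd (Cplus a (Copp b)) = Im a - Im b.
Proof. destruct a, b. unfold Cplus, Copp, Im. simpl. ring. Qed.
Lemma Re_mi (v : C) : Re (Cmult (0, -1) v) = Im v.
Proof. destruct v. unfold Cmult, Re, Im. simpl. ring. Qed.

Lemma taylor_C z n : Cmod (Cplus (Cexp z) (Copp (TnC z n))) <=
  sqrt 2 * (Cmod z ^ S n / INR (fact (S n)) * exp (Cmod z)).
Proof.
  set (B := Cmod z ^ S n / INR (fact (S n)) * exp (Cmod z)).
  pose proof (taylor_re (RtoC 1) z n) as H1. rewrite !Cmult_1_l, Cmod_1, Rmult_1_l in H1.
  pose proof (taylor_re (0, -1) z n) as H2. rewrite Cmod_mi, Rmult_1_l in H2.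
  eapply Rle_trans. apply Cmod_2Rmax. apply Rmult_le_compat_l. apply sqrt_pos.
  apply Rmax_lub.
  - rewrite fst_sub. apply H1.
  - rewrite snd_sub. rewrite !Re_mi in H2. apply H2.
Qed.

Lemma pow_n_scale k F j : pow_n (K:=C_Ring) (Cmult (RtoC k) F) j = Cmult (RtoC (k ^ j)) (pow_n (K:=C_Ring) F j).
Proof.
  induction j.
  - simpl. change (@one C_Ring) with (RtoC 1). ring.
  - simpl. change (@mult C_Ring (Cmult (RtoC k) F) (pow_n (Cmult (RtoC k) F) j)) with (Cmult (Cmult (RtoC k) F) (pow_n (K:=C_Ring) (Cmult (RtoC k) F) j)).
    change (@mult C_Ring F (pow_n F j)) with (Cmult F (pow_n (K:=C_Ring) F j)).
    rewrite IHj, RtoC_mult. ring.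
Qed.

Lemma Dtk_Tn X T k t : 0 <= W0 k T ->
  Dtk X T k t = TnC (Cmult (RtoC k) (F X t)) (Z.to_nat (up (W0 k T)) - 1).
Proof.
  intros HW. set (W := W0 k T) in *. destruct (archimed W) as [A1 A2].
  assert (HU : (1 <= Z.to_nat (up W))%nat).
  { assert (0 < IZR (up W)) by lra. apply lt_IZR in H. lia. }
  unfold Dtk. fold W. rewrite (sumC_extend _ (Z.to_nat (up W) - 1) (Z.to_nat (up W))) by
    (try lia; intros i Hi; replace i with (Z.to_nat (up W)) by lia; destruct Rle_dec as [r|]; auto; exfalso;
     rewrite INR_IZR_INZ, Z2Nat.id in r by lia; lra).
  unfold TnC. apply sumC_ext. intros j Hj. destruct Rle_dec as [|n].
  - rewrite pow_n_scale. rewrite Cmult_assoc, <- RtoC_mult. f_equal. f_equal. unfold Rdiv. ring.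
  - exfalso. apply n. apply (Rle_trans _ (INR (Z.to_nat (up W) - 1))). apply le_INR; auto.
    rewrite minus_INR by auto. rewrite INR_IZR_INZ, Z2Nat.id by lia. simpl. lra.
Qed.

Lemma error_part X T k t : inS T X t ->
  exists E : C, Cmod E <= 3 * exp (- 19 * Rabs k * V0 T) /\
    PX_pow X k t = Cmult (Cplus (RtoC 1) E) (Dtk X T k t).
Proof.
  intros [_ [HRe HIm]].
  set (V := V0 T) in *. assert (HV : 0 <= V) by (pose proof (Rabs_pos (Re (F X t))); lra).
  assert (HW : 0 <= W0 k T) by (unfold W0; pose proof (Rabs_pos k); fold V; nra).
  rewrite Dtk_Tn by auto.
  set (z := Cmult (RtoC k) (F X t)).
  set (U := Z.to_nat (up (W0 k T))).
  destruct (archimed (W0 k T)) as [A1 A2].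
  assert (HU : (1 <= U)%nat). { unfold U. assert (0 < IZR (up (W0 k T))) by lra. apply lt_IZR in H. lia. }
  assert (HUW : W0 k T < INR U). { unfold U. rewrite INR_IZR_INZ, Z2Nat.id. lra. assert (0 < IZR (up (W0 k T))) by lra. apply lt_IZR in H. lia. }
  set (D := TnC z (U - 1)).
  set (R := Cplus (Cexp z) (Copp D)).
  set (c := Cmod z).
  assert (Hc0 : 0 <= c) by apply Cmod_ge_0.
  assert (HcF : Cmod (F X t) <= sqrt 2 * V).
  { eapply Rle_trans. apply Cmod_2Rmax. apply Rmult_le_compat_l. apply sqrt_pos. apply Rmax_lub; auto. }
  assert (Hcz : c <= Rabs k * (sqrt 2 * V)).
  { unfold c, z. rewrite Cmod_mult, Cmod_R. apply Rmult_le_compat_l; auto. apply Rabs_pos. }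
  assert (Hnum : 20 * c <= sqrt 2 * INR U).
  { unfold W0 in HUW. fold V in HUW. pose proof (sqrt_pos 2). pose proof (Rabs_pos k).
    apply (Rle_trans _ (sqrt 2 * (20 * Rabs k * V))). nra. apply Rmult_le_compat_l; lra. }
  pose proof (num_main c U Hc0 HU Hnum) as Hm.
  set (B := sqrt 2 * (c ^ U / INR (fact U) * exp c)).
  assert (HR : Cmod R <= B).
  { pose proof (taylor_C z (U - 1)) as HT. replace (S (U - 1)) with U in HT by lia. exact HT. }
  assert (H4U : (/ 4) ^ U <= / 4).
  { replace U with (S (U - 1)) by lia. simpl. pose proof (pow_le (/4) (U - 1) ltac:(lra)).
    assert ((/4) ^ (U - 1) <= 1) by (rewrite <- (pow1 (U - 1)); apply pow_incr; lra). nra. }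
  pose proof sqrt2_bound. pose proof (sqrt_pos 2). pose proof (exp_pos c).
  assert (HB2 : 2 * B * exp c <= 2 * sqrt 2 * (/ 4) ^ U).
  { unfold B. replace (2 * (sqrt 2 * (c ^ U / INR (fact U) * exp c)) * exp c) with (2 * sqrt 2 * (c ^ U / INR (fact U) * (exp c * exp c))) by ring.
    rewrite <- exp_plus. replace (c + c) with (2 * c) by ring. apply Rmult_le_compat_l; nra. }
  assert (HB : B <= exp (- c) / 2).
  { assert (exp (- c) * exp c = 1) by (rewrite <- exp_plus; replace (- c + c) with 0 by ring; apply exp_0).
    apply (Rmult_le_reg_r (exp c)); auto. nra. }
  assert (HexpRe : exp (- c) <= Cmod (Cexp z)).
  { rewrite Cmod_Cexp. apply exp_le_inc. pose proof (re_le_Cmod z). fold c in H2. unfold Rabs in H2. destruct Rcase_abs; lra. }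
  assert (HD : exp (- c) / 2 <= Cmod D).
  { assert (D = Cplus (Cexp z) (Copp R)) by (unfold R; ring). rewrite H2.
    pose proof (Cmod_triangle (Cplus (Cexp z) (Copp R)) R).
    replace (Cplus (Cplus (Cexp z) (Copp R)) R) with (Cexp z) in H3 by ring. lra. }
  assert (HD0 : D <> RtoC 0).
  { intros E. rewrite E, Cmod_0 in HD. pose proof (exp_pos (- c)). lra. }
  exists (Cmult R (Cinv D)). split.
  - rewrite Cmod_mult, Cmod_inv by auto. pose proof (exp_pos (- c)).
    assert (Cmod R * / Cmod D <= 2 * sqrt 2 * (/ 4) ^ U).
    { apply (Rle_trans _ (B * / (exp (- c) / 2))).
      - apply Rmult_le_compat; auto. apply Cmod_ge_0. left; apply Rinv_0_lt_compat; lra. apply Rinv_le_contravar; lra.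
      - assert (exp (- c) * exp c = 1) by (rewrite <- exp_plus; replace (- c + c) with 0 by ring; apply exp_0).
        replace (B * / (exp (- c) / 2)) with (2 * B * exp c). auto. rewrite exp_Ropp. field. lra. }
    eapply Rle_trans; [apply H3|].
    assert (Hk : exp (- INR U) <= exp (- 19 * Rabs k * V)).
    { apply exp_le_inc. unfold W0 in HUW. fold V in HUW. pose proof (Rabs_pos k). nra. }
    assert (H3U : (/ 3) ^ U <= exp (- INR U)).
    { rewrite pow_inv. rewrite exp_Ropp. apply Rinv_le_contravar. apply exp_pos. apply expU_le. }
    assert (H43 : (/ 4) ^ U <= (/ 3) ^ U) by (apply pow_incr; lra).
    pose proof (pow_le (/4) U ltac:(lra)). nra.
  - unfold PX_pow. fold z.
    replace (Cexp z) with (Cplus D R) by (unfold R; ring).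
    replace (Cmult (Cplus (RtoC 1) (Cmult R (Cinv D))) D) with (Cplus D (Cmult R (Cmult (Cinv D) D))) by ring.
    rewrite Cinv_l by auto. ring.
Qed.

Theorem lemma5 :
  forall k : R,
  exists C0 T0 X0 : R, 0 < C0 /\
  forall T X : R, T0 <= T -> X0 <= X ->
    (forall n : nat, (1 <= n)%nat ->
        (alpha X T k n <> 0 -> INR n <= Rpower X (W0 k T)) /\
        Rabs (alpha X T k n) <= dk (Rabs k) n) /\
    (exists beta : nat -> R,
        multiplicative beta /\
        forall n : nat, (1 <= n)%nat ->
          (INR (Omega n) <= W0 k T -> alpha X T k n = beta n) /\
          ((forall p m : nat, prime (Z.of_nat p) -> (1 <= m)%nat ->
               Nat.divide (p ^ m) n -> INR (p ^ m) <= X) ->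
             beta n = dk k n) /\
          Rabs (beta n) <= dk (Rabs k) n) /\
    forall t : R, inS T X t ->
      Dtk X T k t =
        sumC (fun n => if Nat.leb 1 n && smoothb X n
                       then Cmult (RtoC (alpha X T k n)) (npow_neg n (half_it t))
                       else RtoC 0)
             (Z.to_nat (up (Rpower X (W0 k T)))) /\
      exists E : C,
        Cmod E <= C0 * exp (- 19 * Rabs k * V0 T) /\
        PX_pow X k t = Cmult (Cplus (RtoC 1) E) (Dtk X T k t).
Proof.
  intros k. exists 3, 0, 2. split; [lra|]. intros T X HT HX. split; [|split].
  - intros n Hn. split.
    + apply alpha_supp. lra.
    + apply alpha_bound; auto.
  - exists (beta X k). split. apply beta_mult_def.
    intros n Hn. split; [|split].
    + apply alpha_beta; auto.
    + apply beta_dk; auto.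
    + apply beta_bound; auto.
  - intros t Ht. split.
    + apply Dtk_eq. lra.
    + apply error_part; auto.
Qed.
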